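(* Let $I$ be a closed ideal of $A^+$ and let $f\in A^+$ with $f|_\Gamma\in I^A$. Then the division ideal $I(f)=\{g\in A^+: fg\in I\}$ is weak-$*$ closed in $A^+$.
   Context: $\Gamma$ is the unit circle, $A(\Gamma)$ the algebra of continuous functions on $\Gamma$ with absolutely convergent Fourier series, $A^+=\{f\in A(\Gamma):\hat f(n)=0\ (n<0)\}$. $I^A$ is the closed ideal of $A(\Gamma)$ generated by $I$. The weak-$*$ topology on $A^+$ is obtained by identifying $A^+$ via $f\mapsto(\hat f(n))_{n\ge0}$ with $\ell^1(\mathbb N)$, the dual of $c_0(\mathbb N)$. *)

(* Defs.v *)
From Stdlib Require Import Reals ZArith List.
From Coquelicot Require Import Coquelicot.
Open Scope R_scope.

(* Elements of A(Gamma) are represented by their Fourier coefficient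
   sequences  a : Z -> C  (a n = \hat f (n)).  Under this identification
   A(Gamma) is l^1(Z) with convolution product and norm sum |a n|. *)
Definition seqZ := Z -> C.

Definition sumZR (u : Z -> R) : R :=
  Series (fun n => u (Z.of_nat n)) + Series (fun n => u (- Z.of_nat (S n))%Z).

Definition sumZ (a : seqZ) : C :=
  (sumZR (fun n => fst (a n)), sumZR (fun n => snd (a n))).

Definition inA (a : seqZ) : Prop :=
  ex_series (fun n => Cmod (a (Z.of_nat n))) /\
  ex_series (fun n => Cmod (a (- Z.of_nat (S n))%Z)).

Definition inAplus (a : seqZ) : Prop :=
  inA a /\ forall n : Z, (n < 0)%Z -> a n = 0%C.

Definition normA (a : seqZ) : R := sumZR (fun n => Cmod (a n)).

(* algebra operations (product = convolution of Fourier coefficients,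
   i.e. pointwise product of the functions on Gamma) *)
Definition addA (a b : seqZ) : seqZ := fun n => (a n + b n)%C.
Definition subA (a b : seqZ) : seqZ := fun n => (a n - b n)%C.
Definition scalA (c : C) (a : seqZ) : seqZ := fun n => (c * a n)%C.
Definition zeroA : seqZ := fun _ => 0%C.
Definition mulA (a b : seqZ) : seqZ := fun n => sumZ (fun k => (a k * b (n - k)%Z)%C).

Definition closed_ideal_A (J : seqZ -> Prop) : Prop :=
  (forall a, J a -> inA a) /\
  J zeroA /\
  (forall a b, J a -> J b -> J (addA a b)) /\
  (forall c a, J a -> J (scalA c a)) /\
  (forall h a, inA h -> J a -> J (mulA h a)) /\
  (forall a, inA a ->
     (forall eps, 0 < eps -> exists b, J b /\ normA (subA a b) < eps) -> J a).

Definition closed_ideal_Aplus (I : seqZ -> Prop) : Prop :=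
  (forall a, I a -> inAplus a) /\
  I zeroA /\
  (forall a b, I a -> I b -> I (addA a b)) /\
  (forall c a, I a -> I (scalA c a)) /\
  (forall h a, inAplus h -> I a -> I (mulA h a)) /\
  (forall a, inAplus a ->
     (forall eps, 0 < eps -> exists b, I b /\ normA (subA a b) < eps) -> I a).

Definition gen_closed_ideal_A (I : seqZ -> Prop) (a : seqZ) : Prop :=
  forall J, closed_ideal_A J -> (forall g, I g -> J g) -> J a.

Definition division_ideal (I : seqZ -> Prop) (f : seqZ) (g : seqZ) : Prop :=
  inAplus g /\ I (mulA f g).

(* weak-* topology on A^+ = l^1(N) = (c_0(N))^* *)
Definition in_c0 (c : nat -> C) : Prop := is_lim_seq (fun n => Cmod (c n)) 0.

Definition pairing (a : seqZ) (c : nat -> C) : C :=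
  (Series (fun n => fst (a (Z.of_nat n) * c n)%C),
   Series (fun n => snd (a (Z.of_nat n) * c n)%C)).

Definition weakstar_open (U : seqZ -> Prop) : Prop :=
  (forall a, U a -> inAplus a) /\
  forall a, U a ->
    exists (cs : list (nat -> C)) (eps : R),
      0 < eps /\ (forall c, In c cs -> in_c0 c) /\
      forall b, inAplus b ->
        (forall c, In c cs -> Cmod (pairing b c - pairing a c)%C < eps) -> U b.

Definition weakstar_closed (S : seqZ -> Prop) : Prop :=
  (forall a, S a -> inAplus a) /\
  weakstar_open (fun a => inAplus a /\ ~ S a).

(* Main.v *)
Require Import Defs.
From Stdlib Require Import Reals Lra Lia ZArith List ClassicalEpsilon Classical.
From Coquelicot Require Import Coquelicot.
Open Scope R_scope.

Fixpoint ps (u : nat -> R) (K : nat) : R :=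
  match K with 0%nat => 0 | S K => ps u K + u K end.

Lemma ps_sum_n u K : sum_n u K = ps u (S K).
Proof.
  induction K; simpl.
  - rewrite sum_O. lra.
  - rewrite sum_Sn, IHK. simpl. reflexivity.
Qed.

Lemma series_ps u l : is_series u l <-> is_lim_seq (ps u) l.
Proof.
  split; intro H.
  - apply (is_lim_seq_incr_n _ 1). 
    eapply is_lim_seq_ext; [|exact H]. intro n. rewrite ps_sum_n. f_equal. lia.
  - apply (is_lim_seq_incr_n _ 1) in H.
    change (is_lim_seq (sum_n u) l).
    eapply is_lim_seq_ext; [|exact H]. intro n. rewrite ps_sum_n. f_equal. lia.
Qed.

Lemma ps_ext u v K : (forall k, u k = v k) -> ps u K = ps v K.
Proof. intro H; induction K; simpl; auto. rewrite IHK, H; auto. Qed.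

Lemma ps_ext_loc u v K : (forall k, (k < K)%nat -> u k = v k) -> ps u K = ps v K.
Proof. intro H; induction K; simpl; auto. rewrite IHK, H; auto. Qed.

Lemma ps_plus u v K : ps (fun k => u k + v k) K = ps u K + ps v K.
Proof. induction K; simpl; lra. Qed.
Lemma ps_minus u v K : ps (fun k => u k - v k) K = ps u K - ps v K.
Proof. induction K; simpl; lra. Qed.
Lemma ps_scal c u K : ps (fun k => c * u k) K = c * ps u K.
Proof. induction K; simpl; [ring| rewrite IHK; ring]. Qed.
Lemma ps_le u v K : (forall k, u k <= v k) -> ps u K <= ps v K.
Proof. intro H; induction K; simpl; [lra| specialize (H K); lra]. Qed.
Lemma ps_abs u K : Rabs (ps u K) <= ps (fun k => Rabs (u k)) K.
Proof. induction K; simpl. rewrite Rabs_R0; lra.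
  eapply Rle_trans; [apply Rabs_triang|]. lra. Qed.
Lemma ps_nonneg u K : (forall k, 0 <= u k) -> 0 <= ps u K.
Proof. intro H; induction K; simpl; [lra| specialize (H K); lra]. Qed.
Lemma ps_mono u K M : (forall k, 0 <= u k) -> (K <= M)%nat -> ps u K <= ps u M.
Proof. intros H HKM; induction HKM; simpl; try lra. specialize (H m); lra. Qed.
Lemma ps_shift u K M : ps u (K + M) = ps u K + ps (fun j => u (K + j)%nat) M.
Proof. induction M; simpl. rewrite Nat.add_0_r; lra. rewrite Nat.add_succ_r. simpl. lra. Qed.

Lemma Series_lim u : ex_series u -> is_lim_seq (ps u) (Series u).
Proof. intro H. apply series_ps. apply Series_correct. exact H. Qed.

Lemma ex_series_ps u (l : R) : is_lim_seq (ps u) l -> ex_series u /\ Series u = l.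
Proof. intro H. apply (proj2 (series_ps u l)) in H. split. exists l; exact H. apply is_series_unique; auto. Qed.

Lemma ps_le_Series u K : (forall k, 0 <= u k) -> ex_series u -> ps u K <= Series u.
Proof.
  intros Hp He.
  assert (H := Series_lim u He).
  apply (is_lim_seq_incr_n _ K) in H.
  assert (Rbar_le (ps u K) (Series u)).
  { apply (is_lim_seq_le (fun _ => ps u K) (fun n => ps u (n + K))); [|apply is_lim_seq_const|exact H].
    intro n. apply ps_mono; auto; lia. }
  exact H0.
Qed.

Lemma Series_nonneg u : (forall k, 0 <= u k) -> ex_series u -> 0 <= Series u.
Proof. intros Hp He. eapply Rle_trans; [|apply (ps_le_Series u 0); auto]. simpl; lra. Qed.

Lemma ex_series_bounded u M : (forall k, 0 <= u k) -> (forall K, ps u K <= M) ->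
  ex_series u /\ Series u <= M.
Proof.
  intros Hp HM.
  destruct (ex_finite_lim_seq_incr (ps u) M) as [l Hl].
  - intro n; simpl; specialize (Hp n); lra.
  - exact HM.
  - destruct (ex_series_ps u l Hl) as [He Hs]. split; auto. rewrite Hs.
    assert (Rbar_le l M). { apply (is_lim_seq_le _ (fun _ => M) l M HM Hl). apply is_lim_seq_const. }
    exact H.
Qed.

Lemma Series_le_gen u v : (forall k, u k <= v k) -> ex_series u -> ex_series v -> Series u <= Series v.
Proof.
  intros H Hu Hv.
  assert (Rbar_le (Series u) (Series v)).
  { apply (is_lim_seq_le (ps u) (ps v)); [intro; apply ps_le; auto|apply Series_lim; auto|apply Series_lim; auto]. }
  exact H0.
Qed.

Lemma ex_series_cmp u v : (forall k, Rabs (u k) <= v k) -> ex_series v -> ex_series u.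
Proof. intros H Hv. apply (ex_series_le u v); auto. Qed.

Lemma Series_abs_le u v : (forall k, Rabs (u k) <= v k) -> ex_series v -> Rabs (Series u) <= Series v.
Proof.
  intros H Hv.
  assert (Hu : ex_series u) by (eapply ex_series_cmp; eauto).
  assert (Rbar_le (Rabs (Series u)) (Series v)).
  { apply (is_lim_seq_le (fun K => Rabs (ps u K)) (ps v)).
    - intro K. eapply Rle_trans; [apply ps_abs|apply ps_le; auto].
    - apply (is_lim_seq_abs _ (Series u)). apply Series_lim; auto.
    - apply Series_lim; auto. }
  exact H0.
Qed.

Lemma exs_scal c a : ex_series a -> ex_series (fun n => c * a n).
Proof. intro H. exact (ex_series_scal_l c a H). Qed.
Lemma exs_plus a b : ex_series a -> ex_series b -> ex_series (fun n => a n + b n).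
Proof. intros H1 H2. exact (ex_series_plus a b H1 H2). Qed.
Lemma exs_minus a b : ex_series a -> ex_series b -> ex_series (fun n => a n - b n).
Proof. intros H1 H2. exact (ex_series_minus a b H1 H2). Qed.

Lemma lim_le x y (a b : R) : (forall n, x n <= y n) -> is_lim_seq x a -> is_lim_seq y b -> a <= b.
Proof. intros H Hx Hy. assert (Rbar_le a b) by (apply (is_lim_seq_le x y); auto). exact H0. Qed.

Lemma lim_abs0 x y : (forall n, Rabs (x n) <= y n) -> is_lim_seq y 0 -> is_lim_seq x 0.
Proof.
  intros H Hy. apply (is_lim_seq_le_le (fun n => - y n) x y).
  - intro n; specialize (H n); split; [apply Rabs_le_between in H|apply Rabs_le_between in H]; lra.
  - replace (Finite 0) with (Rbar_mult (-1) 0) by (simpl; f_equal; lra).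
    eapply is_lim_seq_ext; [|apply (is_lim_seq_scal_l y (-1) 0 Hy)]. intro; simpl; ring.
  - exact Hy.
Qed.

Lemma lim_shift_const x (a c : R) : is_lim_seq x a -> is_lim_seq (fun n => x n - c) (a - c).
Proof. intro H. apply is_lim_seq_minus'; auto. apply is_lim_seq_const. Qed.

Lemma tail_le v U N : (forall k, 0 <= v k <= U k) -> ex_series U ->
  ex_series v /\ Series v - ps v N <= Series U - ps U N.
Proof.
  intros H HU.
  assert (Hv : ex_series v).
  { apply (ex_series_cmp v U); auto. intro k; rewrite Rabs_pos_eq; apply H. }
  split; auto.
  apply (lim_le (fun n => ps v (n + N) - ps v N) (fun n => ps U (n + N) - ps U N)).
  - intro n. rewrite !(Nat.add_comm n N), !ps_shift.
    assert (ps (fun j => v (N + j)%nat) n <= ps (fun j => U (N + j)%nat) n) by (apply ps_le; intro; apply H).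
    lra.
  - apply lim_shift_const. apply (is_lim_seq_incr_n (ps v) N). apply Series_lim; auto.
  - apply lim_shift_const. apply (is_lim_seq_incr_n (ps U) N). apply Series_lim; auto.
Qed.

Lemma tail_abs a K : ex_series (fun k => Rabs (a k)) ->
  Rabs (Series a - ps a K) <= Series (fun k => Rabs (a k)) - ps (fun k => Rabs (a k)) K.
Proof.
  intros H. assert (Ha : ex_series a) by (apply ex_series_Rabs; auto).
  apply (lim_le (fun n => Rabs (ps a (n + K) - ps a K)) (fun n => ps (fun k => Rabs (a k)) (n + K) - ps (fun k => Rabs (a k)) K)).
  - intro n. rewrite !(Nat.add_comm n K), !ps_shift.
    replace (ps a K + ps (fun j => a (K + j)%nat) n - ps a K) with (ps (fun j => a (K + j)%nat) n) by ring.
    eapply Rle_trans; [apply ps_abs|]. right; ring.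
  - apply (is_lim_seq_abs _ (Series a - ps a K)). apply lim_shift_const. apply (is_lim_seq_incr_n (ps a) K). apply Series_lim; auto.
  - apply lim_shift_const. apply (is_lim_seq_incr_n (ps _) K). apply Series_lim; auto.
Qed.

Lemma lim_ps_fin (f : nat -> nat -> R) N : (forall n, is_lim_seq (fun K => f K n) 0) ->
  is_lim_seq (fun K => ps (f K) N) 0.
Proof.
  intro H. induction N; simpl.
  - apply is_lim_seq_const.
  - replace (Finite 0) with (Finite (0 + 0)) by (f_equal; ring). apply is_lim_seq_plus'; auto.
Qed.

Lemma dominated (f : nat -> nat -> R) U : (forall K n, 0 <= f K n <= U n) -> ex_series U ->
  (forall n, is_lim_seq (fun K => f K n) 0) -> is_lim_seq (fun K => Series (f K)) 0.
Proof.
  intros Hb HU Hl. apply is_lim_seq_spec. intros eps.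
  assert (HS := Series_lim U HU). apply is_lim_seq_spec in HS.
  assert (e2 : 0 < eps / 2) by (destruct eps; simpl; lra).
  destruct (HS (mkposreal _ e2)) as [N HN]. simpl in HN.
  assert (HF := lim_ps_fin f N Hl). apply is_lim_seq_spec in HF.
  destruct (HF (mkposreal _ e2)) as [M HM]. simpl in HM.
  exists M. intros K HK. specialize (HM K HK). specialize (HN N (le_n N)).
  destruct (tail_le (f K) U N (Hb K) HU) as [Hf Ht].
  assert (0 <= Series (f K)) by (apply Series_nonneg; auto; intro; apply Hb).
  assert (0 <= ps (f K) N) by (apply ps_nonneg; intro; apply Hb).
  rewrite Rminus_0_r, Rabs_pos_eq by lra.
  rewrite Rminus_0_r, Rabs_pos_eq in HM by lra.
  rewrite Rabs_minus_sym, Rabs_pos_eq in HN.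
  - lra.
  - assert (ps U N <= Series U) by (apply ps_le_Series; auto; intro; specialize (Hb 0%nat k); lra). lra.
Qed.

Lemma Series_zero : Series (fun _ => 0) = 0.
Proof.
  apply is_series_unique. apply series_ps. eapply is_lim_seq_ext; [|apply is_lim_seq_const].
  intro K; induction K; simpl; lra.
Qed.

Lemma abs_le_Series a k : ex_series (fun k => Rabs (a k)) -> Rabs (a k) <= Series (fun k => Rabs (a k)).
Proof.
  intro H. eapply Rle_trans; [|apply (ps_le_Series _ (S k)); auto; intro; apply Rabs_pos].
  simpl. assert (0 <= ps (fun k => Rabs (a k)) k) by (apply ps_nonneg; intro; apply Rabs_pos). lra.
Qed.

Lemma fubini (u : nat -> nat -> R) :
  (forall n, ex_series (fun k => Rabs (u n k))) ->
  ex_series (fun n => Series (fun k => Rabs (u n k))) ->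
  (forall k, ex_series (fun n => u n k)) /\
  ex_series (fun k => Series (fun n => u n k)) /\
  Series (fun k => Series (fun n => u n k)) = Series (fun n => Series (fun k => u n k)).
Proof.
  intros H1 H2.
  set (U := fun n => Series (fun k => Rabs (u n k))).
  assert (HU : forall n k, Rabs (u n k) <= U n) by (intros; apply abs_le_Series; auto).
  assert (Hk : forall k, ex_series (fun n => u n k)) by (intro k; apply (ex_series_cmp _ U); auto).
  split; auto.
  set (S := fun n => Series (fun k => u n k)).
  assert (HSn : forall n, Rabs (S n) <= U n) by (intro n; apply Series_abs_le; auto; intro; apply Rle_refl).
  assert (HS : ex_series S) by (apply (ex_series_cmp _ U); auto).
  assert (Hpsn : forall K, ex_series (fun n => ps (u n) K)).
  { intro K. apply (ex_series_cmp _ U); auto. intro n. eapply Rle_trans; [apply ps_abs|].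
    apply ps_le_Series; auto. intro; apply Rabs_pos. }
  assert (Hswap : forall K, ps (fun k => Series (fun n => u n k)) K = Series (fun n => ps (u n) K)).
  { induction K; simpl.
    - symmetry; apply Series_zero.
    - rewrite IHK. rewrite <- Series_plus; auto. }
  assert (Hlim : is_lim_seq (ps (fun k => Series (fun n => u n k))) (Series S)).
  { apply (is_lim_seq_ext (fun K => Series S - (Series S - ps (fun k => Series (fun n => u n k)) K))).
    { intro; ring. }
    replace (Finite (Series S)) with (Finite (Series S - 0)) by (f_equal; ring).
    apply is_lim_seq_minus'; [apply is_lim_seq_const|].
    apply (lim_abs0 _ (fun K => Series (fun n => U n - ps (fun k => Rabs (u n k)) K))).
    - intro K. rewrite Hswap. rewrite <- Series_minus; auto.
      apply Series_abs_le.
      + intro n. apply tail_abs. auto.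
      + apply (ex_series_cmp _ U); auto. intro n.
        assert (ps (fun k => Rabs (u n k)) K <= U n) by (apply ps_le_Series; auto; intro; apply Rabs_pos).
        assert (0 <= ps (fun k => Rabs (u n k)) K) by (apply ps_nonneg; intro; apply Rabs_pos).
        rewrite Rabs_pos_eq; lra.
    - apply (dominated _ U); auto.
      + intros K n. assert (ps (fun k => Rabs (u n k)) K <= U n) by (apply ps_le_Series; auto; intro; apply Rabs_pos).
        assert (0 <= ps (fun k => Rabs (u n k)) K) by (apply ps_nonneg; intro; apply Rabs_pos). lra.
      + intro n. replace (Finite 0) with (Finite (U n - U n)) by (f_equal; ring).
        apply is_lim_seq_minus'; [apply is_lim_seq_const|]. apply Series_lim; auto. }
  destruct (ex_series_ps _ _ Hlim) as [He Heq]. split; auto.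
Qed.

Lemma fubini_abs (u : nat -> nat -> R) :
  (forall n, ex_series (fun k => Rabs (u n k))) ->
  ex_series (fun n => Series (fun k => Rabs (u n k))) ->
  (forall k, ex_series (fun n => Rabs (u n k))) /\
  ex_series (fun k => Series (fun n => Rabs (u n k))).
Proof.
  intros H1 H2. destruct (fubini (fun n k => Rabs (u n k))) as [A [B _]].
  - intro n. eapply ex_series_ext; [|apply (H1 n)]. intro; simpl; rewrite Rabs_Rabsolu; auto.
  - eapply ex_series_ext; [|apply H2]. intro n; apply Series_ext; intro; rewrite Rabs_Rabsolu; auto.
  - split; auto.
Qed.

Definition exZ (v : Z -> R) : Prop :=
  ex_series (fun n => v (Z.of_nat n)) /\ ex_series (fun n => v (- Z.of_nat (S n))%Z).

Lemma Series_shift a q : ex_series a ->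
  ex_series (fun k => a (q + k)%nat) /\ Series a = ps a q + Series (fun k => a (q + k)%nat).
Proof.
  intro H. assert (H' : ex_series (fun k => a (q + k)%nat)) by (apply ex_series_incr_n; auto).
  split; auto.
  assert (L1 := Series_lim a H). apply (is_lim_seq_incr_n _ q) in L1.
  assert (L2 : is_lim_seq (fun n => ps a q + ps (fun k => a (q + k)%nat) n) (ps a q + Series (fun k => a (q + k)%nat))).
  { apply is_lim_seq_plus'. apply is_lim_seq_const. apply Series_lim; auto. }
  assert (Finite (Series a) = Finite (ps a q + Series (fun k => a (q + k)%nat))).
  { rewrite <- (is_lim_seq_unique _ _ L1). rewrite <- (is_lim_seq_unique _ _ L2).
    apply Lim_seq_ext. intro n. rewrite Nat.add_comm, ps_shift. reflexivity. }
  injection H0; auto.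
Qed.

Lemma ps_head u q : ps u (S q) = u 0%nat + ps (fun j => u (S j)) q.
Proof. induction q; simpl in *. ring. rewrite IHq. ring. Qed.

Lemma ps_rev u q : ps u q = ps (fun j => u (q - 1 - j)%nat) q.
Proof.
  induction q. reflexivity.
  rewrite (ps_head (fun j => u (S q - 1 - j)%nat)).
  change (ps u q + u q = u (S q - 1 - 0)%nat + ps (fun j => u (S q - 1 - S j)%nat) q).
  rewrite IHq.
  replace (S q - 1 - 0)%nat with q by lia. rewrite Rplus_comm. f_equal.
  apply ps_ext. intro j. f_equal. lia.
Qed.

Lemma sumZR_nonneg b : (forall n, 0 <= b n) -> exZ b -> 0 <= sumZR b.
Proof. intros H [H1 H2]. unfold sumZR. pose proof (Series_nonneg _ (fun k => H _) H1). pose proof (Series_nonneg _ (fun k => H _) H2). lra. Qed.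

Lemma shift_bound b s : (forall n, 0 <= b n) -> exZ b ->
  ex_series (fun n => b (Z.of_nat n + s)%Z) /\ Series (fun n => b (Z.of_nat n + s)%Z) <= sumZR b.
Proof.
  intros Hp [H1 H2]. unfold sumZR.
  assert (0 <= Series (fun n => b (- Z.of_nat (S n))%Z)) by (apply Series_nonneg; auto).
  assert (0 <= Series (fun n => b (Z.of_nat n))) by (apply Series_nonneg; auto).
  destruct s as [|p|p].
  - split. eapply ex_series_ext; [|exact H1]; intro; rewrite Z.add_0_r; auto.
    rewrite (Series_ext _ (fun n => b (Z.of_nat n))) by (intro; rewrite Z.add_0_r; auto). lra.
  - destruct (Series_shift _ (Pos.to_nat p) H1) as [E1 E2].
    assert (Heq : forall n, b (Z.of_nat n + Z.pos p)%Z = b (Z.of_nat (Pos.to_nat p + n))).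
    { intro; f_equal; lia. }
    split. eapply ex_series_ext; [|exact E1]; intro; rewrite Heq; auto.
    rewrite (Series_ext _ _ Heq).
    assert (0 <= ps (fun n => b (Z.of_nat n)) (Pos.to_nat p)) by (apply ps_nonneg; auto). lra.
  - set (q := Pos.to_nat p).
    assert (Heq : forall n, b (Z.of_nat (q + n) + Z.neg p)%Z = b (Z.of_nat n)).
    { intro; f_equal; unfold q; lia. }
    assert (E : ex_series (fun n => b (Z.of_nat n + Z.neg p)%Z)).
    { apply (ex_series_incr_n _ q). eapply ex_series_ext; [|exact H1]. intro; rewrite Heq; auto. }
    split; auto.
    destruct (Series_shift _ q E) as [_ E2]. rewrite E2.
    rewrite (Series_ext _ _ Heq).
    rewrite ps_rev.
    rewrite (ps_ext_loc _ (fun j => b (- Z.of_nat (S j))%Z)).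
    + assert (ps (fun j => b (- Z.of_nat (S j))%Z) q <= Series (fun n => b (- Z.of_nat (S n))%Z)) by (apply ps_le_Series; auto).
      lra.
    + intros j Hj. f_equal. lia.
Qed.

Lemma exZ_cmp u v : (forall k, Rabs (u k) <= v k) -> exZ v -> exZ u.
Proof. intros H [H1 H2]. split; [eapply ex_series_cmp; [|exact H1]|eapply ex_series_cmp; [|exact H2]]; intro; apply H. Qed.

Lemma exZ_abs u : exZ (fun k => Rabs (u k)) -> exZ u.
Proof. intro H; eapply exZ_cmp; [|exact H]. intro; apply Rle_refl. Qed.

Lemma exZ_plus u v : exZ u -> exZ v -> exZ (fun k => u k + v k).
Proof. intros [H1 H2] [H3 H4]. split; [apply (ex_series_plus _ _ H1 H3) | apply (ex_series_plus _ _ H2 H4)]. Qed.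

Lemma exZ_scal c u : exZ u -> exZ (fun k => c * u k).
Proof. intros [H1 H2]. split; [apply (ex_series_scal_l c _ H1) | apply (ex_series_scal_l c _ H2)]. Qed.

Lemma sumZR_plus u v : exZ u -> exZ v -> sumZR (fun k => u k + v k) = sumZR u + sumZR v.
Proof. intros [H1 H2] [H3 H4]. unfold sumZR. rewrite !Series_plus; auto. ring. Qed.

Lemma sumZR_scal c u : sumZR (fun k => c * u k) = c * sumZR u.
Proof. unfold sumZR. rewrite !Series_scal_l. ring. Qed.

Lemma sumZR_ext u v : (forall k, u k = v k) -> sumZR u = sumZR v.
Proof. intro H. unfold sumZR. rewrite (Series_ext _ _ (fun n => H _)), (Series_ext (fun n => u _) _ (fun n => H _)). auto. Qed.

Lemma sumZR_abs_le u v : (forall k, Rabs (u k) <= v k) -> exZ v -> Rabs (sumZR u) <= sumZR v.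
Proof.
  intros H [H1 H2]. unfold sumZR. eapply Rle_trans; [apply Rabs_triang|].
  pose proof (Series_abs_le (fun n => u (Z.of_nat n)) _ (fun n => H _) H1).
  pose proof (Series_abs_le (fun n => u (- Z.of_nat (S n))%Z) _ (fun n => H _) H2). lra.
Qed.

Lemma sumZR_le u v : (forall k, u k <= v k) -> exZ u -> exZ v -> sumZR u <= sumZR v.
Proof.
  intros H [H1 H2] [H3 H4]. unfold sumZR.
  pose proof (Series_le_gen _ _ (fun n => H (Z.of_nat n)) H1 H3).
  pose proof (Series_le_gen _ _ (fun n => H (- Z.of_nat (S n))%Z) H2 H4). lra.
Qed.

Lemma Series_pos_le_sumZR b : (forall n, 0 <= b n) -> exZ b -> Series (fun n => b (Z.of_nat n)) <= sumZR b.
Proof. intros H [H1 H2]. unfold sumZR. pose proof (Series_nonneg _ (fun n => H (- Z.of_nat (S n))%Z) H2). lra. Qed.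
Lemma Series_neg_le_sumZR b : (forall n, 0 <= b n) -> exZ b -> Series (fun n => b (- Z.of_nat (S n))%Z) <= sumZR b.
Proof. intros H [H1 H2]. unfold sumZR. pose proof (Series_nonneg _ (fun n => H (Z.of_nat n)) H1). lra. Qed.

Lemma abs_le_sumZR u k : exZ (fun k => Rabs (u k)) -> Rabs (u k) <= sumZR (fun k => Rabs (u k)).
Proof.
  intros [H1 H2]. unfold sumZR.
  pose proof (Series_nonneg _ (fun n => Rabs_pos (u (Z.of_nat n))) H1).
  pose proof (Series_nonneg _ (fun n => Rabs_pos (u (- Z.of_nat (S n))%Z)) H2).
  destruct (Z_le_gt_dec 0 k).
  - pose proof (abs_le_Series (fun n => u (Z.of_nat n)) (Z.to_nat k) H1). simpl in H3.
    rewrite Z2Nat.id in H3 by lia. lra.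
  - pose proof (abs_le_Series (fun n => u (- Z.of_nat (S n))%Z) (Z.to_nat (- k - 1)) H2). cbv beta in H3.
    assert (E: (- Z.of_nat (S (Z.to_nat (- k - 1))))%Z = k) by (rewrite Nat2Z.inj_succ, Z2Nat.id; lia). rewrite E in H3. lra.
Qed.

Lemma fubini_ZN (u : Z -> nat -> R) :
  (forall k, ex_series (fun n => Rabs (u k n))) ->
  exZ (fun k => Series (fun n => Rabs (u k n))) ->
  (forall n, exZ (fun k => u k n)) /\
  ex_series (fun n => sumZR (fun k => u k n)) /\
  Series (fun n => sumZR (fun k => u k n)) = sumZR (fun k => Series (fun n => u k n)).
Proof.
  intros H1 [H2 H3].
  destruct (fubini (fun a b => u (Z.of_nat a) b) (fun a => H1 _) H2) as [P1 [P2 P3]].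
  destruct (fubini (fun a b => u (- Z.of_nat (S a))%Z b) (fun a => H1 _) H3) as [N1 [N2 N3]].
  split; [intro n; split; [apply P1|apply N1]|].
  split. apply (ex_series_plus _ _ P2 N2).
  unfold sumZR. rewrite Series_plus; auto. rewrite P3, N3. reflexivity.
Qed.

Lemma fubini_ZN_abs (u : Z -> nat -> R) :
  (forall k, ex_series (fun n => Rabs (u k n))) ->
  exZ (fun k => Series (fun n => Rabs (u k n))) ->
  (forall n, exZ (fun k => Rabs (u k n))) /\
  ex_series (fun n => sumZR (fun k => Rabs (u k n))).
Proof.
  intros H1 H2. destruct (fubini_ZN (fun k n => Rabs (u k n))) as [A1 [A2 _]].
  - intro k. eapply ex_series_ext; [|apply (H1 k)]. intro; rewrite Rabs_Rabsolu; auto.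
  - destruct H2 as [H2 H3]; split; [eapply ex_series_ext; [|exact H2]|eapply ex_series_ext; [|exact H3]]; intro; apply Series_ext; intro; rewrite Rabs_Rabsolu; auto.
  - split; auto.
Qed.

Lemma fubini_NZ (u : nat -> Z -> R) :
  (forall n, exZ (fun k => Rabs (u n k))) ->
  ex_series (fun n => sumZR (fun k => Rabs (u n k))) ->
  (forall k, ex_series (fun n => u n k)) /\
  exZ (fun k => Series (fun n => u n k)) /\
  sumZR (fun k => Series (fun n => u n k)) = Series (fun n => sumZR (fun k => u n k)).
Proof.
  intros H1 H2.
  assert (HP : ex_series (fun n => Series (fun a => Rabs (u n (Z.of_nat a))))).
  { apply (ex_series_cmp _ _ (fun n => Rle_trans _ _ _ (Req_le _ _ (Rabs_pos_eq _ (Series_nonneg _ (fun _ => Rabs_pos _) (proj1 (H1 n))))) (Series_pos_le_sumZR (fun k => Rabs (u n k)) (fun _ => Rabs_pos _) (H1 n)))). exact H2. }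
  assert (HN : ex_series (fun n => Series (fun a => Rabs (u n (- Z.of_nat (S a))%Z)))).
  { apply (ex_series_cmp _ _ (fun n => Rle_trans _ _ _ (Req_le _ _ (Rabs_pos_eq _ (Series_nonneg _ (fun _ => Rabs_pos _) (proj2 (H1 n))))) (Series_neg_le_sumZR (fun k => Rabs (u n k)) (fun _ => Rabs_pos _) (H1 n)))). exact H2. }
  destruct (fubini (fun n a => u n (Z.of_nat a)) (fun n => proj1 (H1 n)) HP) as [P1 [P2 P3]].
  destruct (fubini (fun n a => u n (- Z.of_nat (S a))%Z) (fun n => proj2 (H1 n)) HN) as [N1 [N2 N3]].
  assert (Hk : forall k, ex_series (fun n => u n k)).
  { intro k. destruct (Z_le_gt_dec 0 k).
    - rewrite <- (Z2Nat.id k) by lia. apply P1.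
    - assert (E: (- Z.of_nat (S (Z.to_nat (- k - 1))))%Z = k) by (rewrite Nat2Z.inj_succ, Z2Nat.id; lia). rewrite <- E. apply N1. }
  split; auto. split. split; auto.
  unfold sumZR. rewrite P3, N3. rewrite <- Series_plus; auto.
  - apply ex_series_Rabs. eapply ex_series_cmp; [|exact HP]. intro n. rewrite Rabs_Rabsolu. apply Series_abs_le; auto. intro; apply Rle_refl. apply (proj1 (H1 n)).
  - apply ex_series_Rabs. eapply ex_series_cmp; [|exact HN]. intro n. rewrite Rabs_Rabsolu. apply Series_abs_le; auto. intro; apply Rle_refl. apply (proj2 (H1 n)).
Qed.

Lemma fubini_NZ_abs (u : nat -> Z -> R) :
  (forall n, exZ (fun k => Rabs (u n k))) ->
  ex_series (fun n => sumZR (fun k => Rabs (u n k))) ->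
  (forall k, ex_series (fun n => Rabs (u n k))) /\
  exZ (fun k => Series (fun n => Rabs (u n k))).
Proof.
  intros H1 H2. destruct (fubini_NZ (fun n k => Rabs (u n k))) as [A1 [A2 _]].
  - intro n. eapply exZ_cmp; [|apply (H1 n)]. intro; cbv beta; rewrite !Rabs_Rabsolu; apply Rle_refl.
  - eapply ex_series_ext; [|apply H2]. intro n; apply sumZR_ext; intro; rewrite Rabs_Rabsolu; auto.
  - split; auto.
Qed.

Ltac Csimpl := unfold Cminus, Cmult, Cplus, Copp in *; simpl in *.
Ltac Ceq := apply injective_projections; Csimpl; ring.

Lemma fst_le z : Rabs (fst z) <= Cmod z.
Proof. eapply Rle_trans; [apply Rmax_l|apply Rmax_Cmod]. Qed.
Lemma snd_le z : Rabs (snd z) <= Cmod z.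
Proof. eapply Rle_trans; [apply Rmax_r|apply Rmax_Cmod]. Qed.
Lemma Cmod_le_sum z : Cmod z <= Rabs (fst z) + Rabs (snd z).
Proof.
  unfold Cmod. rewrite <- (sqrt_Rsqr (Rabs (fst z) + Rabs (snd z))) by (pose proof (Rabs_pos (fst z)); pose proof (Rabs_pos (snd z)); lra).
  apply sqrt_le_1_alt. unfold Rsqr.
  assert (Rabs (fst z) * Rabs (fst z) = fst z ^ 2) by (rewrite <- Rabs_mult, Rabs_pos_eq; [ring|nra]).
  assert (Rabs (snd z) * Rabs (snd z) = snd z ^ 2) by (rewrite <- Rabs_mult, Rabs_pos_eq; [ring|nra]).
  pose proof (Rabs_pos (fst z)); pose proof (Rabs_pos (snd z)). nra.
Qed.

Definition CS (a : nat -> C) : C := (Series (fun n => fst (a n)), Series (fun n => snd (a n))).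

Lemma exC_fst a : ex_series (fun n => Cmod (a n)) -> ex_series (fun n => fst (a n)).
Proof. intro H; apply (ex_series_cmp _ _ (fun n => fst_le (a n)) H). Qed.
Lemma exC_snd a : ex_series (fun n => Cmod (a n)) -> ex_series (fun n => snd (a n)).
Proof. intro H; apply (ex_series_cmp _ _ (fun n => snd_le (a n)) H). Qed.

Lemma CS_bound a : ex_series (fun n => Cmod (a n)) -> Cmod (CS a) <= 2 * Series (fun n => Cmod (a n)).
Proof.
  intro H. eapply Rle_trans; [apply Cmod_le_sum|]. unfold CS; simpl.
  pose proof (Series_abs_le _ _ (fun n => fst_le (a n)) H).
  pose proof (Series_abs_le _ _ (fun n => snd_le (a n)) H). lra.
Qed.

Lemma CS_ext a b : (forall n, a n = b n) -> CS a = CS b.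
Proof. intro H; unfold CS. rewrite (Series_ext _ _ (fun n => f_equal fst (H n))), (Series_ext _ _ (fun n => f_equal snd (H n))). auto. Qed.

Lemma CS_plus a b : ex_series (fun n => Cmod (a n)) -> ex_series (fun n => Cmod (b n)) ->
  CS (fun n => a n + b n)%C = (CS a + CS b)%C.
Proof.
  intros Ha Hb. unfold CS. Csimpl. f_equal; apply Series_plus.
  all: first [apply exC_fst | apply exC_snd]; auto.
Qed.

Lemma CS_scal c a : ex_series (fun n => Cmod (a n)) -> CS (fun n => c * a n)%C = (c * CS a)%C.
Proof.
  intros Ha. unfold CS. Csimpl.
  pose proof (exC_fst _ Ha). pose proof (exC_snd _ Ha).
  f_equal.
  - rewrite Series_minus; [rewrite !Series_scal_l; auto| |]; apply exs_scal; auto.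
  - rewrite Series_plus; [rewrite !Series_scal_l; auto| |]; apply exs_scal; auto.
Qed.

Lemma CS_zero : CS (fun _ => 0%C) = 0%C.
Proof. unfold CS; simpl. rewrite Series_zero. auto. Qed.

Definition exCZ (a : seqZ) := exZ (fun k => Cmod (a k)).

Lemma exCZ_fst a : exCZ a -> exZ (fun k => fst (a k)).
Proof. intro H; apply (exZ_cmp _ _ (fun k => fst_le (a k)) H). Qed.
Lemma exCZ_snd a : exCZ a -> exZ (fun k => snd (a k)).
Proof. intro H; apply (exZ_cmp _ _ (fun k => snd_le (a k)) H). Qed.

Lemma sumZ_bound a : exCZ a -> Cmod (sumZ a) <= 2 * sumZR (fun k => Cmod (a k)).
Proof.
  intro H. eapply Rle_trans; [apply Cmod_le_sum|]. unfold sumZ; simpl.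
  pose proof (sumZR_abs_le _ _ (fun n => fst_le (a n)) H).
  pose proof (sumZR_abs_le _ _ (fun n => snd_le (a n)) H). lra.
Qed.

Lemma sumZ_ext a b : (forall n, a n = b n) -> sumZ a = sumZ b.
Proof. intro H; unfold sumZ. rewrite (sumZR_ext _ _ (fun n => f_equal fst (H n))), (sumZR_ext _ _ (fun n => f_equal snd (H n))). auto. Qed.

Lemma inA_exCZ a : inA a <-> exCZ a.
Proof. split; intro H; exact H. Qed.

Lemma Cmod_fst_snd_abs z : Rabs (fst z) + Rabs (snd z) <= 2 * Cmod z.
Proof. pose proof (fst_le z); pose proof (snd_le z); lra. Qed.

Lemma normA_nonneg a : inA a -> 0 <= normA a.
Proof. intro H. apply sumZR_nonneg; auto. intro; apply Cmod_ge_0. Qed.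

Lemma inA_cmp a b : (forall z, Cmod (a z) <= Cmod (b z)) -> inA b -> inA a.
Proof. intros H Hb. apply (exZ_cmp _ _ (fun z => Rle_trans _ _ _ (Req_le _ _ (Rabs_pos_eq _ (Cmod_ge_0 _))) (H z)) Hb). Qed.

Lemma inA_add a b : inA a -> inA b -> inA (addA a b).
Proof.
  intros Ha Hb. assert (H := exZ_plus (fun z => Cmod (a z)) (fun z => Cmod (b z)) Ha Hb).
  apply (exZ_cmp _ _ (fun z => Rle_trans _ _ _ (Req_le _ _ (Rabs_pos_eq _ (Cmod_ge_0 _))) (Cmod_triangle (a z) (b z))) H).
Qed.

Lemma inA_scal c a : inA a -> inA (scalA c a).
Proof.
  intros Ha. assert (H := exZ_scal (Cmod c) (fun z => Cmod (a z)) Ha).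
  apply (exZ_cmp _ _ (fun z => Rle_trans _ _ _ (Req_le _ _ (Rabs_pos_eq _ (Cmod_ge_0 _))) (Req_le _ _ (Cmod_mult c (a z)))) H).
Qed.

Lemma inA_sub a b : inA a -> inA b -> inA (subA a b).
Proof.
  intros Ha Hb. apply (inA_cmp _ (addA a (scalA (-1) b))); [|apply inA_add; auto; apply inA_scal; auto].
  intro z. unfold subA, addA, scalA. right. f_equal. Ceq.
Qed.

Lemma normA_ext a b : (forall z, Cmod (a z) = Cmod (b z)) -> normA a = normA b.
Proof. intro H; unfold normA; apply sumZR_ext; auto. Qed.

Lemma normA_triangle a b : inA a -> inA b -> normA (addA a b) <= normA a + normA b.
Proof.
  intros Ha Hb. unfold normA. rewrite <- sumZR_plus; auto.
  apply sumZR_le. intro; apply Cmod_triangle. apply inA_add; auto. apply exZ_plus; auto.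
Qed.

Lemma normA_scal c a : normA (scalA c a) = Cmod c * normA a.
Proof. unfold normA, scalA. rewrite <- sumZR_scal. apply sumZR_ext. intro; apply Cmod_mult. Qed.

Lemma normA_le a b : (forall z, Cmod (a z) <= Cmod (b z)) -> inA b -> normA a <= normA b.
Proof. intros H Hb. unfold normA. apply sumZR_le; auto. eapply inA_cmp; eauto. Qed.

Definition dd (psi : nat -> C) (h : seqZ) (m : Z) : C :=
  CS (fun n => psi n * h (Z.of_nat n - m)%Z)%C.

Lemma shiftC h s : inA h -> ex_series (fun n => Cmod (h (Z.of_nat n + s)%Z)) /\
  Series (fun n => Cmod (h (Z.of_nat n + s)%Z)) <= normA h.
Proof. intro H. apply (shift_bound (fun z => Cmod (h z))); auto. intro; apply Cmod_ge_0. Qed.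

Lemma dd_ex psi B h m : (forall n, Cmod (psi n) <= B) -> inA h ->
  ex_series (fun n => Cmod (psi n * h (Z.of_nat n - m)%Z)%C) /\
  Series (fun n => Cmod (psi n * h (Z.of_nat n - m)%Z)%C) <= B * normA h.
Proof.
  intros HB Hh. destruct (shiftC h (- m) Hh) as [E1 E2].
  assert (Hc : forall n, Rabs (Cmod (psi n * h (Z.of_nat n - m)%Z)%C) <= B * Cmod (h (Z.of_nat n + - m)%Z)).
  { intro n. rewrite Rabs_pos_eq by apply Cmod_ge_0. rewrite Cmod_mult. replace (Z.of_nat n - m)%Z with (Z.of_nat n + - m)%Z by lia.
    apply Rmult_le_compat_r; auto. apply Cmod_ge_0. }
  assert (Ex : ex_series (fun n => Cmod (psi n * h (Z.of_nat n - m)%Z)%C)).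
  { eapply ex_series_cmp; [exact Hc|]. apply exs_scal; auto. }
  split; auto.
  eapply Rle_trans. apply Series_le_gen; [intro n; eapply Rle_trans; [apply Rle_abs|apply Hc]|auto|apply exs_scal; auto].
  rewrite Series_scal_l.
  assert (0 <= B) by (eapply Rle_trans; [apply Cmod_ge_0|apply (HB 0%nat)]).
  apply Rmult_le_compat_l; auto.
Qed.

Lemma dd_bound psi B h m : (forall n, Cmod (psi n) <= B) -> inA h ->
  Cmod (dd psi h m) <= 2 * (B * normA h).
Proof.
  intros HB Hh. destruct (dd_ex psi B h m HB Hh) as [E1 E2]. unfold dd.
  eapply Rle_trans; [apply CS_bound; auto|]. lra.
Qed.

Lemma dd_plus psi B a b m : (forall n, Cmod (psi n) <= B) -> inA a -> inA b ->
  dd psi (addA a b) m = (dd psi a m + dd psi b m)%C.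
Proof.
  intros HB Ha Hb. unfold dd. rewrite <- CS_plus by (apply (dd_ex psi B); auto).
  apply CS_ext. intro n. unfold addA. Ceq.
Qed.

Lemma dd_scal psi B c a m : (forall n, Cmod (psi n) <= B) -> inA a ->
  dd psi (scalA c a) m = (c * dd psi a m)%C.
Proof.
  intros HB Ha. unfold dd. rewrite <- CS_scal by (apply (dd_ex psi B); auto).
  apply CS_ext. intro n. unfold scalA. Ceq.
Qed.

Lemma dd_sub psi B a b m : (forall n, Cmod (psi n) <= B) -> inA a -> inA b ->
  dd psi (subA a b) m = (dd psi a m - dd psi b m)%C.
Proof.
  intros HB Ha Hb.
  assert (E : dd psi (subA a b) m = dd psi (addA a (scalA (-1) b)) m).
  { unfold dd. apply CS_ext. intro n. unfold subA, addA, scalA. Ceq. }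
  rewrite E, (dd_plus psi B) by (auto; apply inA_scal; auto).
  rewrite (dd_scal psi B) by auto. Ceq.
Qed.

Lemma dd_zero psi m : dd psi zeroA m = 0%C.
Proof. unfold dd. rewrite <- CS_zero. apply CS_ext. intro. unfold zeroA. Ceq. Qed.

Definition Lin (al be : R) (z : C) : R := al * fst z + be * snd z.

Lemma Lin_Series al be w : ex_series (fun n => Cmod (w n)) ->
  Series (fun n => Lin al be (w n)) = Lin al be (CS w).
Proof.
  intro H. unfold Lin, CS; simpl. rewrite Series_plus, !Series_scal_l; auto.
  all: apply exs_scal; first [apply exC_fst | apply exC_snd]; auto.
Qed.

Lemma Lin_sumZR al be w : exCZ w ->
  sumZR (fun k => Lin al be (w k)) = Lin al be (sumZ w).
Proof.
  intro H. unfold Lin, sumZ; simpl. rewrite sumZR_plus, !sumZR_scal; auto.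
  all: apply exZ_scal; first [apply exCZ_fst | apply exCZ_snd]; auto.
Qed.

Lemma Lin_mult al be w z : Lin al be (w * z)%C = Lin (al * fst w + be * snd w) (- al * snd w + be * fst w) z.
Proof. unfold Lin; Csimpl; ring. Qed.

Lemma Lin_abs al be z : Rabs (Lin al be z) <= (Rabs al + Rabs be) * Cmod z.
Proof.
  unfold Lin. eapply Rle_trans; [apply Rabs_triang|]. rewrite !Rabs_mult.
  pose proof (fst_le z). pose proof (snd_le z). pose proof (Rabs_pos al). pose proof (Rabs_pos be).
  pose proof (Rabs_pos (fst z)). pose proof (Rabs_pos (snd z)). nra.
Qed.

Lemma C_ext_Lin (z w : C) : Lin 1 0 z = Lin 1 0 w -> Lin 0 1 z = Lin 0 1 w -> z = w.
Proof. unfold Lin. intros H1 H2. apply injective_projections; lra. Qed.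

Definition refl (a : seqZ) : seqZ := fun z => a (- z)%Z.

Lemma inA_refl a : inA a -> inA (refl a).
Proof.
  intros [H1 H2]. unfold refl. split.
  - apply (ex_series_incr_n _ 1). eapply ex_series_ext; [|exact H2]. intro n. cbv beta. reflexivity.
  - apply (ex_series_incr_n _ 1) in H1. eapply ex_series_ext; [|exact H1]. intro n. cbv beta. do 2 f_equal.
Qed.

Lemma conv_ex h b (sg : Z -> Z) : inA h -> inA b ->
  (forall n, exZ (fun k => Cmod (h k) * Cmod (b (Z.of_nat n + sg k)%Z))) /\
  ex_series (fun n => sumZR (fun k => Cmod (h k) * Cmod (b (Z.of_nat n + sg k)%Z))).
Proof.
  intros Hh Hb.
  destruct (fubini_ZN_abs (fun k n => Cmod (h k) * Cmod (b (Z.of_nat n + sg k)%Z))) as [A1 A2].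
  - intro k. destruct (shiftC b (sg k) Hb) as [E1 _].
    eapply ex_series_ext; [|apply (exs_scal (Cmod (h k)) _ E1)]. intro; simpl.
    rewrite Rabs_pos_eq; auto. apply Rmult_le_pos; apply Cmod_ge_0.
  - apply (exZ_cmp _ (fun k => Cmod (h k) * normA b)).
    + intro k. destruct (shiftC b (sg k) Hb) as [E1 E2].
      rewrite Rabs_pos_eq.
      * rewrite (Series_ext _ (fun n => Cmod (h k) * Cmod (b (Z.of_nat n + sg k)%Z))).
        -- rewrite Series_scal_l. apply Rmult_le_compat_l; auto. apply Cmod_ge_0.
        -- intro; rewrite Rabs_pos_eq; auto. apply Rmult_le_pos; apply Cmod_ge_0.
      * apply Series_nonneg; [intro; apply Rabs_pos|]. eapply ex_series_ext; [|apply (exs_scal (Cmod (h k)) _ E1)]. intro; simpl.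
        rewrite Rabs_pos_eq; auto. apply Rmult_le_pos; apply Cmod_ge_0.
    + apply (exZ_scal (normA b) (fun k => Cmod (h k))) in Hh.
      destruct Hh as [X Y]; split; [eapply ex_series_ext; [|exact X]|eapply ex_series_ext; [|exact Y]]; intro; cbv beta; apply Rmult_comm.
  - split.
    + intro n. eapply exZ_cmp; [|apply (A1 n)]. intro; apply Rle_refl.
    + eapply ex_series_ext; [|exact A2]. intro n. apply sumZR_ext. intro k.
      rewrite Rabs_pos_eq; auto. apply Rmult_le_pos; apply Cmod_ge_0.
Qed.

Lemma conv_pt h a b (sg : Z -> Z) (j : Z) n : inA h -> inA b ->
  (forall k, a (j - k)%Z = b (Z.of_nat n + sg k)%Z) ->
  exCZ (fun k => h k * a (j - k)%Z)%C /\
  Cmod (mulA h a j) <= 2 * sumZR (fun k => Cmod (h k) * Cmod (b (Z.of_nat n + sg k)%Z)).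
Proof.
  intros Hh Hb He. destruct (conv_ex h b sg Hh Hb) as [A1 _].
  assert (E : exCZ (fun k => h k * a (j - k)%Z)%C).
  { unfold exCZ. eapply exZ_cmp; [|apply (A1 n)]. intro k. rewrite Rabs_pos_eq by apply Cmod_ge_0.
    rewrite Cmod_mult, He. apply Rle_refl. }
  split; auto. unfold mulA. eapply Rle_trans; [apply sumZ_bound; auto|].
  apply Rmult_le_compat_l; [lra|]. right. apply sumZR_ext. intro k. rewrite Cmod_mult, He. auto.
Qed.

Lemma inA_mul h a : inA h -> inA a -> inA (mulA h a).
Proof.
  intros Hh Ha. split.
  - destruct (conv_ex h a (fun k => - k)%Z Hh Ha) as [_ A2].
    apply (ex_series_cmp _ (fun n => 2 * sumZR (fun k => Cmod (h k) * Cmod (a (Z.of_nat n + - k)%Z)))).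
    + intro n. rewrite Rabs_pos_eq by apply Cmod_ge_0.
      apply (proj2 (conv_pt h a a (fun k => - k)%Z (Z.of_nat n) n Hh Ha (fun k => f_equal a (eq_refl)))).
    + apply exs_scal; auto.
  - assert (Hr := inA_refl a Ha).
    destruct (conv_ex h (refl a) (fun k => 1 + k)%Z Hh Hr) as [_ A2].
    apply (ex_series_cmp _ (fun n => 2 * sumZR (fun k => Cmod (h k) * Cmod (refl a (Z.of_nat n + (1 + k))%Z)))).
    + intro n. rewrite Rabs_pos_eq by apply Cmod_ge_0.
      apply (proj2 (conv_pt h a (refl a) (fun k => 1 + k)%Z (- Z.of_nat (S n))%Z n Hh Hr (fun k => ltac:(unfold refl; f_equal; lia)))).
    + apply exs_scal; auto.
Qed.

Lemma dd_mul_Lin psi B h a m al be : (forall n, Cmod (psi n) <= B) -> inA h -> inA a ->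
  Lin al be (dd psi (mulA h a) m) = Lin al be (sumZ (fun k => h k * dd psi a (m + k)%Z)%C).
Proof.
  intros HB Hh Ha.
  assert (HB0 : 0 <= B) by (eapply Rle_trans; [apply Cmod_ge_0|apply (HB 0%nat)]).
  set (Y := fun n k => Lin al be (psi n * (h k * a (Z.of_nat n - m - k)%Z))%C).
  set (W := fun (n : nat) k => Cmod (h k) * Cmod (a (Z.of_nat n + (- m - k))%Z)).
  set (c := (Rabs al + Rabs be) * B).
  assert (Hc : 0 <= c) by (unfold c; pose proof (Rabs_pos al); pose proof (Rabs_pos be); nra).
  destruct (conv_ex h a (fun k => - m - k)%Z Hh Ha) as [W1 W2].
  assert (HY : forall n k, Rabs (Y n k) <= c * W n k).
  { intros n k. unfold Y. eapply Rle_trans; [apply Lin_abs|]. rewrite !Cmod_mult.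
    unfold c, W. replace (Z.of_nat n - m - k)%Z with (Z.of_nat n + (- m - k))%Z by lia.
    pose proof (Rabs_pos al); pose proof (Rabs_pos be).
    pose proof (Cmod_ge_0 (h k)); pose proof (Cmod_ge_0 (a (Z.of_nat n + (- m - k))%Z)).
    rewrite Rmult_assoc. apply Rmult_le_compat_l; [lra|]. apply Rmult_le_compat_r; [apply Rmult_le_pos; auto|apply HB]. }
  assert (HW1 : forall n, exZ (W n)) by (intro n; apply W1).
  destruct (fubini_NZ Y) as [F1 [F2 F3]].
  { intro n. eapply exZ_cmp; [|apply (exZ_scal c _ (HW1 n))]. intro k. rewrite Rabs_Rabsolu. apply HY. }
  { apply (ex_series_cmp _ (fun n => c * sumZR (W n))); [|apply exs_scal; exact W2].
    intro n. rewrite Rabs_pos_eq by (apply sumZR_nonneg; [intro; apply Rabs_pos|eapply exZ_cmp; [|apply (exZ_scal c _ (HW1 n))]; intro k; rewrite Rabs_Rabsolu; apply HY]).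
    rewrite <- sumZR_scal. apply sumZR_le; [intro; apply HY| |apply exZ_scal; auto].
    eapply exZ_cmp; [|apply (exZ_scal c _ (HW1 n))]; intro k; rewrite Rabs_Rabsolu; apply HY. }
  assert (Hm := inA_mul h a Hh Ha).
  unfold dd at 1. rewrite <- Lin_Series by (apply (dd_ex psi B); auto).
  transitivity (Series (fun n => sumZR (fun k => Y n k))).
  { apply Series_ext. intro n. rewrite Lin_mult. unfold mulA.
    assert (EX : exCZ (fun k => h k * a (Z.of_nat n - m - k)%Z)%C).
    { assert (Hk : forall k, a (Z.of_nat n - m - k)%Z = a (Z.of_nat n + (fun k => - m - k) k)%Z) by (intro k; f_equal; lia).
      apply (proj1 (conv_pt h a a (fun k => - m - k)%Z (Z.of_nat n - m)%Z n Hh Ha Hk)). }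
    rewrite <- Lin_sumZR.
    - apply sumZR_ext. intro k. unfold Y. rewrite (Lin_mult al be (psi n)). reflexivity.
    - exact EX. }
  rewrite <- F3.
  rewrite <- Lin_sumZR.
  - apply sumZR_ext. intro k. rewrite Lin_mult. unfold dd. rewrite <- Lin_Series by (apply (dd_ex psi B); auto).
    apply Series_ext. intro n. unfold Y. rewrite <- Lin_mult.
    replace (Z.of_nat n - (m + k))%Z with (Z.of_nat n - m - k)%Z by lia.
    f_equal. Ceq.
  - unfold exCZ. apply (exZ_cmp _ (fun k => (2 * (B * normA a)) * Cmod (h k))); [|apply exZ_scal; exact Hh].
    intro k. rewrite Rabs_pos_eq by apply Cmod_ge_0. rewrite Cmod_mult, Rmult_comm.
    apply Rmult_le_compat_r; [apply Cmod_ge_0|]. apply (dd_bound psi B); auto.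
Qed.

Lemma dd_mul psi B h a m : (forall n, Cmod (psi n) <= B) -> inA h -> inA a ->
  dd psi (mulA h a) m = sumZ (fun k => h k * dd psi a (m + k)%Z)%C.
Proof. intros; apply C_ext_Lin; apply (dd_mul_Lin psi B); auto. Qed.

Lemma ps_single u n0 K : (forall n, n <> n0 -> u n = 0) ->
  ps u K = if Compare_dec.lt_dec n0 K then u n0 else 0.
Proof.
  intro H. induction K; simpl.
  - destruct (Compare_dec.lt_dec n0 0); [lia|auto].
  - rewrite IHK. destruct (Compare_dec.lt_dec n0 K), (Compare_dec.lt_dec n0 (S K)); try lia.
    + rewrite (H K) by lia; ring.
    + assert (n0 = K) by lia. subst; ring.
    + rewrite (H K) by lia; ring.
Qed.

Lemma Series_single u n0 : (forall n, n <> n0 -> u n = 0) -> ex_series u /\ Series u = u n0.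
Proof.
  intro H. apply ex_series_ps. apply (is_lim_seq_incr_n _ (S n0)).
  eapply is_lim_seq_ext; [|apply is_lim_seq_const]. intro n. rewrite (ps_single u n0) by auto.
  destruct (Compare_dec.lt_dec n0 (n + S n0)); auto; lia.
Qed.

Lemma Series_zero_ex : ex_series (fun _ : nat => 0) /\ Series (fun _ : nat => 0) = 0.
Proof. apply (Series_single (fun _ => 0) 0%nat). auto. Qed.

Lemma sumZR_single u k0 : (forall k, k <> k0 -> u k = 0) -> exZ u /\ sumZR u = u k0.
Proof.
  intro H. unfold exZ, sumZR. destruct (Z_le_gt_dec 0 k0).
  - destruct (Series_single (fun n => u (Z.of_nat n)) (Z.to_nat k0)) as [A1 A2].
    { intros n Hn. apply H. lia. }
    destruct (Series_single (fun n => u (- Z.of_nat (S n))%Z) 0%nat) as [B1 B2].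
    { intros n Hn. apply H. lia. }
    rewrite A2, B2. rewrite Z2Nat.id by lia. rewrite (H (- Z.of_nat 1)%Z) by lia. split; auto. ring.
  - destruct (Series_single (fun n => u (Z.of_nat n)) 0%nat) as [A1 A2].
    { intros n Hn. apply H. lia. }
    destruct (Series_single (fun n => u (- Z.of_nat (S n))%Z) (Z.to_nat (- k0 - 1))) as [B1 B2].
    { intros n Hn. apply H. lia. }
    rewrite A2, B2. rewrite (H (Z.of_nat 0)) by lia.
    assert (E: (- Z.of_nat (S (Z.to_nat (- k0 - 1))))%Z = k0) by (rewrite Nat2Z.inj_succ, Z2Nat.id; lia).
    rewrite E. split; auto. ring.
Qed.

Lemma sumZ_single (w : seqZ) k0 : (forall k, k <> k0 -> w k = 0%C) -> exCZ w /\ sumZ w = w k0.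
Proof.
  intro H. unfold sumZ.
  destruct (sumZR_single (fun k => fst (w k)) k0) as [_ E1]. { intros k Hk; rewrite H; auto. }
  destruct (sumZR_single (fun k => snd (w k)) k0) as [_ E2]. { intros k Hk; rewrite H; auto. }
  destruct (sumZR_single (fun k => Cmod (w k)) k0) as [E3 _]. { intros k Hk; rewrite H; auto. apply Cmod_0. }
  split; auto. rewrite E1, E2. destruct (w k0); auto.
Qed.

Definition delta (m : nat) : seqZ := fun k => if Z.eq_dec k (Z.of_nat m) then 1%C else 0%C.

Lemma delta_Aplus m : inAplus (delta m).
Proof.
  split.
  - destruct (sumZ_single (delta m) (Z.of_nat m)) as [E _]; [|exact E].
    intros k Hk. unfold delta. destruct (Z.eq_dec k (Z.of_nat m)); tauto.
  - intros n Hn. unfold delta. destruct (Z.eq_dec n (Z.of_nat m)); auto. lia.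
Qed.

Lemma mulA_delta m a j : mulA (delta m) a j = a (j - Z.of_nat m)%Z.
Proof.
  unfold mulA. destruct (sumZ_single (fun k => delta m k * a (j - k)%Z)%C (Z.of_nat m)) as [_ E].
  - intros k Hk. unfold delta. destruct (Z.eq_dec k (Z.of_nat m)); [tauto|]. Ceq.
  - rewrite E. unfold delta. destruct (Z.eq_dec (Z.of_nat m) (Z.of_nat m)); [|tauto]. Ceq.
Qed.

Lemma inA_zero : inA zeroA.
Proof.
  destruct (sumZ_single zeroA 0%Z) as [E _]; auto.
Qed.

Definition Jpsi (psi : nat -> C) (h : seqZ) : Prop :=
  inA h /\ is_lim_seq (fun m => Cmod (dd psi h (Z.of_nat m))) 0.

Lemma lim_shiftZ (g : Z -> R) k : is_lim_seq (fun m => g (Z.of_nat m)) 0 ->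
  is_lim_seq (fun m => g (Z.of_nat m + k)%Z) 0.
Proof.
  intro H. destruct (Z_le_gt_dec 0 k).
  - apply (is_lim_seq_incr_n _ (Z.to_nat k)) in H.
    eapply is_lim_seq_ext; [|exact H]. intro n. cbv beta. f_equal. rewrite Nat2Z.inj_add, Z2Nat.id by lia. lia.
  - apply (is_lim_seq_incr_n _ (Z.to_nat (- k))).
    eapply is_lim_seq_ext; [|exact H]. intro n. cbv beta. f_equal. rewrite Nat2Z.inj_add, Z2Nat.id by lia. lia.
Qed.

Lemma dominatedZ (f : nat -> Z -> R) U : (forall m k, 0 <= f m k <= U k) -> exZ U ->
  (forall k, is_lim_seq (fun m => f m k) 0) -> is_lim_seq (fun m => sumZR (f m)) 0.
Proof.
  intros Hb [U1 U2] Hl. unfold sumZR.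
  replace (Finite 0) with (Finite (0 + 0)) by (f_equal; ring).
  apply is_lim_seq_plus'.
  - apply (dominated (fun m n => f m (Z.of_nat n)) (fun n => U (Z.of_nat n))); auto.
  - apply (dominated (fun m n => f m (- Z.of_nat (S n))%Z) (fun n => U (- Z.of_nat (S n))%Z)); auto.
Qed.

Lemma J_closed_ideal psi B (I : seqZ -> Prop) :
  (forall n, Cmod (psi n) <= B) ->
  (forall a, I a -> inAplus a) ->
  (forall h a, inAplus h -> I a -> I (mulA h a)) ->
  (forall y, I y -> dd psi y 0 = 0%C) ->
  closed_ideal_A (Jpsi psi) /\ (forall g, I g -> Jpsi psi g).
Proof.
  intros HB HIA HIm HI0.
  assert (HB0 : 0 <= B) by (eapply Rle_trans; [apply Cmod_ge_0|apply (HB 0%nat)]).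
  split; [unfold closed_ideal_A; split; [|split; [|split; [|split; [|split]]]]|].
  - intros a [H _]; exact H.
  - split; [apply inA_zero|].
    eapply is_lim_seq_ext; [|apply is_lim_seq_const]. intro; rewrite dd_zero, Cmod_0; auto.
  - intros a b [Ha La] [Hb Lb]. split; [apply inA_add; auto|].
    apply (lim_abs0 _ (fun m => Cmod (dd psi a (Z.of_nat m)) + Cmod (dd psi b (Z.of_nat m)))).
    + intro m. rewrite Rabs_pos_eq by apply Cmod_ge_0. rewrite (dd_plus psi B) by auto. apply Cmod_triangle.
    + replace (Finite 0) with (Finite (0 + 0)) by (f_equal; ring). apply is_lim_seq_plus'; auto.
  - intros c a [Ha La]. split; [apply inA_scal; auto|].
    replace (Finite 0) with (Rbar_mult (Cmod c) 0) by (simpl; f_equal; ring).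
    eapply is_lim_seq_ext; [|apply (is_lim_seq_scal_l _ (Cmod c) 0 La)].
    intro m. simpl. rewrite (dd_scal psi B) by auto. rewrite Cmod_mult; auto.
  - intros h a Hh [Ha La]. split; [apply inA_mul; auto|].
    set (U := fun k => Cmod (h k) * (2 * (B * normA a))).
    assert (Hf : forall m k, 0 <= Cmod (h k) * Cmod (dd psi a (Z.of_nat m + k)%Z) <= U k).
    { intros m k. split. apply Rmult_le_pos; apply Cmod_ge_0.
      unfold U. apply Rmult_le_compat_l; [apply Cmod_ge_0|]. apply (dd_bound psi B); auto. }
    assert (HU : exZ U).
    { unfold U. destruct (exZ_scal (2 * (B * normA a)) (fun k => Cmod (h k)) Hh) as [X Y].
      split; [eapply ex_series_ext; [|exact X]|eapply ex_series_ext; [|exact Y]]; intro; cbv beta; apply Rmult_comm. }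
    apply (lim_abs0 _ (fun m => 2 * sumZR (fun k => Cmod (h k) * Cmod (dd psi a (Z.of_nat m + k)%Z)))).
    + intro m. rewrite Rabs_pos_eq by apply Cmod_ge_0. rewrite (dd_mul psi B) by auto.
      eapply Rle_trans; [apply sumZ_bound|].
      * unfold exCZ. eapply exZ_cmp; [|exact HU]. intro k. rewrite Rabs_pos_eq by apply Cmod_ge_0. rewrite Cmod_mult. apply Hf.
      * right. f_equal. apply sumZR_ext. intro; apply Cmod_mult.
    + replace (Finite 0) with (Rbar_mult 2 0) by (simpl; f_equal; ring).
      apply is_lim_seq_scal_l.
      apply (dominatedZ _ U); auto.
      intro k. replace (Finite 0) with (Rbar_mult (Cmod (h k)) 0) by (simpl; f_equal; ring).
      apply is_lim_seq_scal_l. apply (lim_shiftZ (fun z => Cmod (dd psi a z))). exact La.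
  - intros a Ha Happ. split; auto.
    apply is_lim_seq_spec. intro eps.
    set (e2 := eps / (4 * (B + 1))).
    assert (He2 : 0 < e2) by (unfold e2; destruct eps; simpl; apply Rdiv_lt_0_compat; lra).
    destruct (Happ e2 He2) as [b [[Hb Lb] Hab]].
    apply is_lim_seq_spec in Lb. assert (Heps2 : 0 < eps / 2) by (destruct eps; simpl; lra).
    destruct (Lb (mkposreal _ Heps2)) as [N HN]. exists N. intros m Hm.
    specialize (HN m Hm). simpl in HN. rewrite Rminus_0_r, Rabs_pos_eq in HN by apply Cmod_ge_0.
    rewrite Rminus_0_r, Rabs_pos_eq by apply Cmod_ge_0.
    assert (E : dd psi a (Z.of_nat m) = (dd psi b (Z.of_nat m) + dd psi (subA a b) (Z.of_nat m))%C).
    { rewrite (dd_sub psi B) by auto. Ceq. }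
    rewrite E. eapply Rle_lt_trans; [apply Cmod_triangle|].
    assert (Cmod (dd psi (subA a b) (Z.of_nat m)) <= 2 * (B * normA (subA a b))) by (apply (dd_bound psi B); auto; apply inA_sub; auto).
    assert (0 <= normA (subA a b)) by (apply normA_nonneg; apply inA_sub; auto).
    assert (2 * (B * normA (subA a b)) <= 2 * (B * e2)) by (apply Rmult_le_compat_l; [lra|]; apply Rmult_le_compat_l; lra).
    assert (2 * (B * e2) < eps / 2).
    { unfold e2. destruct eps as [e pe]; simpl in *.
      replace (2 * (B * (e / (4 * (B + 1))))) with (e / 2 * (B / (B + 1))) by (field; lra).
      assert (B / (B + 1) < 1) by (apply Rmult_lt_reg_r with (B + 1); [lra|]; unfold Rdiv; rewrite Rmult_assoc, Rinv_l by lra; lra).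
      nra. }
    lra.
  - intros g Hg. destruct (HIA g Hg) as [Hga _]. split; auto.
    eapply is_lim_seq_ext; [|apply is_lim_seq_const]. intro m.
    assert (E : dd psi g (Z.of_nat m) = dd psi (mulA (delta m) g) 0).
    { unfold dd. apply CS_ext. intro n. rewrite mulA_delta. do 2 f_equal. lia. }
    rewrite E, HI0, Cmod_0; auto. apply HIm; auto. apply delta_Aplus.
Qed.

Lemma ps_zeros K : ps (fun _ => 0) K = 0.
Proof. induction K; simpl; lra. Qed.

Lemma Series_fin u K : (forall n, (n >= K)%nat -> u n = 0) -> ex_series u /\ Series u = ps u K.
Proof.
  intro H. apply ex_series_ps. apply (is_lim_seq_incr_n _ K).
  eapply is_lim_seq_ext; [|apply is_lim_seq_const]. intro n.
  rewrite Nat.add_comm, ps_shift. rewrite (ps_ext (fun j => u (K + j)%nat) (fun _ => 0)), ps_zeros; [ring|].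
  intro; apply H; lia.
Qed.

Lemma sumZR_fin u N : (forall k, (k < 0 \/ k > Z.of_nat N)%Z -> u k = 0) ->
  sumZR u = ps (fun n => u (Z.of_nat n)) (S N).
Proof.
  intro H. unfold sumZR.
  destruct (Series_fin (fun n => u (Z.of_nat n)) (S N)) as [_ E1]. { intros n Hn. apply H. lia. }
  rewrite (Series_ext (fun n => u (- Z.of_nat (S n))%Z) (fun _ => 0)).
  - rewrite Series_zero, E1. ring.
  - intro n. apply H. lia.
Qed.

Lemma sumZR_zero u : (forall k, u k = 0) -> sumZR u = 0.
Proof. intro H. unfold sumZR. rewrite (Series_ext _ (fun _ => 0)), (Series_ext (fun n => u (- Z.of_nat (S n))%Z) (fun _ => 0)), Series_zero by auto. ring. Qed.

Lemma fst_comm x y : fst (x * y)%C = fst (y * x)%C.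
Proof. Csimpl; ring. Qed.
Lemma snd_comm x y : snd (x * y)%C = snd (y * x)%C.
Proof. Csimpl; ring. Qed.

Lemma conv_comm_R (L : C -> R) (f b : seqZ) j :
  (forall x y, L (x * y)%C = L (y * x)%C) -> (forall z, L (0 * z)%C = 0) ->
  (forall n, (n < 0)%Z -> f n = 0%C) -> (forall n, (n < 0)%Z -> b n = 0%C) ->
  sumZR (fun k => L (f k * b (j - k)%Z)%C) = sumZR (fun k => L (b k * f (j - k)%Z)%C).
Proof.
  intros Hc H0 Hf Hb.
  assert (Z1 : forall x, L (x * 0)%C = 0) by (intro; rewrite Hc; auto).
  destruct (Z_le_gt_dec 0 j).
  - set (N := Z.to_nat j).
    assert (HN : Z.of_nat N = j) by (unfold N; rewrite Z2Nat.id; lia).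
    rewrite (sumZR_fin _ N), (sumZR_fin _ N).
    + rewrite ps_rev. apply ps_ext_loc. intros i Hi.
      replace (Z.of_nat (S N - 1 - i)) with (j - Z.of_nat i)%Z by lia.
      replace (j - (j - Z.of_nat i))%Z with (Z.of_nat i) by lia. apply Hc.
    + intros k [Hk|Hk]; [rewrite Hb by auto; apply H0|rewrite (Hf (j - k)%Z) by lia; apply Z1].
    + intros k [Hk|Hk]; [rewrite Hf by auto; apply H0|rewrite (Hb (j - k)%Z) by lia; apply Z1].
  - rewrite !sumZR_zero; auto.
    + intro k. destruct (Z_lt_le_dec k 0); [rewrite Hb by auto; apply H0|rewrite (Hf (j - k)%Z) by lia; apply Z1].
    + intro k. destruct (Z_lt_le_dec k 0); [rewrite Hf by auto; apply H0|rewrite (Hb (j - k)%Z) by lia; apply Z1].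
Qed.

Lemma mulA_comm (f b : seqZ) j : (forall n, (n < 0)%Z -> f n = 0%C) -> (forall n, (n < 0)%Z -> b n = 0%C) ->
  mulA f b j = mulA b f j.
Proof.
  intros Hf Hb. unfold mulA, sumZ. f_equal.
  - apply conv_comm_R; auto. apply fst_comm. intro; Csimpl; ring.
  - apply conv_comm_R; auto. apply snd_comm. intro; Csimpl; ring.
Qed.

Lemma mulA_Aplus f b : inAplus f -> inAplus b -> inAplus (mulA f b).
Proof.
  intros [Hf Hf0] [Hb Hb0]. split. apply inA_mul; auto.
  intros n Hn. unfold mulA, sumZ. rewrite !sumZR_zero; auto.
  - intro k. destruct (Z_lt_le_dec k 0); [rewrite Hf0 by auto|rewrite (Hb0 (n - k)%Z) by lia]; Csimpl; ring.
  - intro k. destruct (Z_lt_le_dec k 0); [rewrite Hf0 by auto|rewrite (Hb0 (n - k)%Z) by lia]; Csimpl; ring.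
Qed.

Lemma pairing_dd psi B f b : (forall n, Cmod (psi n) <= B) -> inA f -> inAplus b ->
  pairing b (fun m => dd psi f (Z.of_nat m)) = dd psi (mulA b f) 0.
Proof.
  intros HB Hf [Hb Hb0]. rewrite (dd_mul psi B) by auto.
  unfold pairing, sumZ, sumZR. f_equal.
  - rewrite (Series_ext (fun n => fst (b (- Z.of_nat (S n))%Z * dd psi f (0 + - Z.of_nat (S n))%Z)%C) (fun _ => 0)).
    + rewrite Series_zero, Rplus_0_r. apply Series_ext. intro n. reflexivity.
    + intro n. rewrite Hb0 by lia. Csimpl; ring.
  - rewrite (Series_ext (fun n => snd (b (- Z.of_nat (S n))%Z * dd psi f (0 + - Z.of_nat (S n))%Z)%C) (fun _ => 0)).
    + rewrite Series_zero, Rplus_0_r. apply Series_ext. intro n. reflexivity.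
    + intro n. rewrite Hb0 by lia. Csimpl; ring.
Qed.

Definition Ci : C := (0, 1).

Definition vv (x : seqZ) (j : nat) : seqZ :=
  match j with
  | 0%nat => x
  | S j' => if Nat.odd j' then scalA Ci (delta (Nat.div2 j')) else delta (Nat.div2 j')
  end.

Definition comb (x : seqZ) (t : nat -> R) (k : nat) : seqZ :=
  fun z => (ps (fun j => t j * fst (vv x j z)) k, ps (fun j => t j * snd (vv x j z)) k).

Lemma comb_S x t k z : comb x t (S k) z = (comb x t k z + RtoC (t k) * vv x k z)%C.
Proof. unfold comb, RtoC. simpl. Ceq. Qed.

Lemma comb_plus x t t' k z : comb x (fun j => t j + t' j) k z = (comb x t k z + comb x t' k z)%C.
Proof.
  unfold comb. Csimpl. f_equal.
  - rewrite <- ps_plus. apply ps_ext; intro; ring.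
  - rewrite <- ps_plus. apply ps_ext; intro; ring.
Qed.

Lemma comb_scal x r t k z : comb x (fun j => r * t j) k z = (RtoC r * comb x t k z)%C.
Proof.
  unfold comb, RtoC. Csimpl. f_equal.
  - rewrite Rmult_0_l, Rminus_0_r, <- ps_scal. apply ps_ext; intro; ring.
  - rewrite Rmult_0_l, Rplus_0_r, <- ps_scal. apply ps_ext; intro; ring.
Qed.

Lemma vv_A x j : inA x -> inA (vv x j).
Proof.
  intro Hx. destruct j; simpl; auto.
  destruct (Nat.odd j). apply inA_scal. all: apply delta_Aplus.
Qed.

Lemma comb_A x t k : inA x -> inA (comb x t k).
Proof.
  intro Hx. induction k.
  - apply (inA_cmp _ zeroA); [|apply inA_zero]. intro z. unfold comb, zeroA; simpl. right; auto.
  - apply (inA_cmp _ (addA (comb x t k) (scalA (RtoC (t k)) (vv x k)))).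
    + intro z. rewrite comb_S. right; auto.
    + apply inA_add; auto. apply inA_scal. apply vv_A; auto.
Qed.

Definition Pk (I : seqZ -> Prop) (x : seqZ) (k : nat) (a : nat -> R) : Prop :=
  forall m t, I m -> ps (fun j => t j * a j) k <= normA (addA m (comb x t k)).

Lemma Pk_ext I x k a b : (forall j, (j < k)%nat -> a j = b j) -> Pk I x k a -> Pk I x k b.
Proof. intros H P m t Hm. rewrite <- (ps_ext_loc (fun j => t j * a j)); auto. intros; rewrite H; auto. Qed.

Definition upd (a : nat -> R) (k : nat) (c : R) : nat -> R := fun j => if Nat.eqb j k then c else a j.

Lemma Cmod_RtoC r : Cmod (RtoC r) = Rabs r.
Proof. apply Cmod_R. Qed.

Lemma Pk_extend (I : seqZ -> Prop) x k a :
  inA x -> (forall a, I a -> inA a) -> I zeroA ->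
  (forall a b, I a -> I b -> I (addA a b)) -> (forall c a, I a -> I (scalA c a)) ->
  Pk I x k a -> exists c, Pk I x (S k) (upd a k c).
Proof.
  intros Hx HIA HI0 HIadd HIscal P.
  set (phi := fun t => ps (fun j => t j * a j) k).
  set (w := fun m t => addA m (comb x t k)).
  set (V := vv x k).
  assert (HV : inA V) by (apply vv_A; auto).
  assert (Hw : forall m t, I m -> inA (w m t)) by (intros; apply inA_add; auto; apply comb_A; auto).
  set (E := fun r => exists m t, I m /\ r = phi t - normA (subA (w m t) V)).
  assert (Key : forall m t m' t', I m -> I m' ->
     phi t - normA (subA (w m t) V) <= normA (addA (w m' t') V) - phi t').
  { intros m t m' t' Hm Hm'.
    assert (H1 : phi t + phi t' = phi (fun j => t j + t' j)).
    { unfold phi. rewrite <- ps_plus. apply ps_ext; intro; ring. }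
    assert (H2 : phi (fun j => t j + t' j) <= normA (addA (addA m m') (comb x (fun j => t j + t' j) k))) by (apply P; auto).
    assert (H3 : normA (addA (addA m m') (comb x (fun j => t j + t' j) k)) = normA (addA (subA (w m t) V) (addA (w m' t') V))).
    { apply normA_ext. intro z. f_equal. unfold w, addA, subA. rewrite comb_plus. Ceq. }
    assert (H4 : normA (addA (subA (w m t) V) (addA (w m' t') V)) <= normA (subA (w m t) V) + normA (addA (w m' t') V)).
    { apply normA_triangle. apply inA_sub; auto. apply inA_add; auto. }
    lra. }
  destruct (completeness E) as [c [Hub Hlub]].
  - exists (normA (addA (w zeroA (fun _ => 0)) V) - phi (fun _ => 0)).
    intros r [m [t [Hm ->]]]. apply Key; auto.
  - exists (phi (fun _ => 0) - normA (subA (w zeroA (fun _ => 0)) V)). exists zeroA, (fun _ => 0). auto.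
  - assert (Lo : forall m t, I m -> phi t - normA (subA (w m t) V) <= c).
    { intros m t Hm. apply Hub. exists m, t. auto. }
    assert (Up : forall m t, I m -> c <= normA (addA (w m t) V) - phi t).
    { intros m t Hm. apply Hlub. intros r [m' [t' [Hm' ->]]]. apply Key; auto. }
    exists c. intros m t Hm.
    assert (EL : ps (fun j => t j * upd a k c j) (S k) = phi t + t k * c).
    { simpl. unfold phi, upd. rewrite Nat.eqb_refl. f_equal. apply ps_ext_loc. intros j Hj.
      destruct (Nat.eqb_spec j k); [lia|auto]. }
    assert (ER : forall r : R, normA (addA m (comb x t (S k))) = normA (addA (w m t) (scalA (RtoC (t k)) V))).
    { intro. apply normA_ext. intro z. f_equal. unfold w, V, addA, scalA. rewrite comb_S. Ceq. }
    rewrite EL, (ER 0).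
    destruct (total_order_T (t k) 0) as [[Hneg|Hz]|Hpos].
    +
      set (s := - t k). assert (Hs : 0 < s) by (unfold s; lra).
      set (m' := scalA (RtoC (/ s)) m). set (t' := fun j => / s * t j).
      assert (Hm' : I m') by (apply HIscal; auto).
      specialize (Lo m' t' Hm').
      assert (Ephi : phi t' = / s * phi t) by (unfold phi, t'; rewrite <- ps_scal; apply ps_ext; intro; ring).
      assert (En : normA (subA (w m' t') V) = / s * normA (addA (w m t) (scalA (RtoC (t k)) V))).
      { rewrite <- (Rabs_pos_eq (/ s)) by (apply Rlt_le, Rinv_0_lt_compat; auto).
        rewrite <- Cmod_RtoC, <- normA_scal. apply normA_ext. intro z. f_equal.
        unfold w, m', t', addA, subA, scalA. rewrite comb_scal. unfold s, RtoC. Csimpl.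
        apply injective_projections; simpl; field; lra. }
      rewrite Ephi, En in Lo.
      apply (Rmult_le_compat_l s) in Lo; [|lra].
      replace (s * (/ s * phi t - / s * normA (addA (w m t) (scalA (RtoC (t k)) V)))) with
        (phi t - normA (addA (w m t) (scalA (RtoC (t k)) V))) in Lo by (field; lra).
      unfold s in Lo. nra.
    + rewrite Hz, Rmult_0_l, Rplus_0_r.
      replace (normA (addA (w m t) (scalA (RtoC 0) V))) with (normA (w m t)).
      * apply P; auto.
      * apply normA_ext. intro z. f_equal. unfold addA, scalA, RtoC. Ceq.
    + set (s := t k). assert (Hs : 0 < s) by (unfold s; lra).
      set (m' := scalA (RtoC (/ s)) m). set (t' := fun j => / s * t j).
      assert (Hm' : I m') by (apply HIscal; auto).
      specialize (Up m' t' Hm').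
      assert (Ephi : phi t' = / s * phi t) by (unfold phi, t'; rewrite <- ps_scal; apply ps_ext; intro; ring).
      assert (En : normA (addA (w m' t') V) = / s * normA (addA (w m t) (scalA (RtoC (t k)) V))).
      { rewrite <- (Rabs_pos_eq (/ s)) by (apply Rlt_le, Rinv_0_lt_compat; auto).
        rewrite <- Cmod_RtoC, <- normA_scal. apply normA_ext. intro z. f_equal.
        unfold w, m', t', addA, subA, scalA. rewrite comb_scal. unfold s, RtoC. Csimpl.
        apply injective_projections; simpl; field; lra. }
      rewrite Ephi, En in Up.
      apply (Rmult_le_compat_l s) in Up; [|lra].
      replace (s * (/ s * normA (addA (w m t) (scalA (RtoC (t k)) V)) - / s * phi t)) with
        (normA (addA (w m t) (scalA (RtoC (t k)) V)) - phi t) in Up by (field; lra).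
      unfold s in *. lra.
Qed.

Lemma Pk_base (I : seqZ -> Prop) x dl :
  inA x -> (forall a, I a -> inA a) -> (forall c a, I a -> I (scalA c a)) -> 0 < dl ->
  (forall b, I b -> dl <= normA (subA x b)) ->
  Pk I x 1 (fun _ => dl).
Proof.
  intros Hx HIA HIscal Hdl Hd m t Hm. simpl. rewrite Rplus_0_l.
  assert (HA : inA (addA m (comb x t 1))) by (apply inA_add; auto; apply comb_A; auto).
  pose proof (normA_nonneg _ HA).
  destruct (Rle_dec (t 0%nat) 0).
  - nra.
  - set (s := t 0%nat). assert (Hs : 0 < s) by (unfold s; lra).
    set (b := scalA (RtoC (- / s)) m).
    assert (Hb : I b) by (apply HIscal; auto).
    specialize (Hd b Hb).
    assert (E : normA (addA m (comb x t 1)) = s * normA (subA x b)).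
    { replace (s * normA (subA x b)) with (Rabs s * normA (subA x b)) by (rewrite Rabs_pos_eq; lra). rewrite <- Cmod_RtoC, <- normA_scal.
      apply normA_ext. intro z. f_equal. unfold addA, subA, scalA, b, comb, RtoC. simpl. fold s. Csimpl.
      apply injective_projections; simpl; field; lra. }
    rewrite E. apply Rmult_le_compat_l; lra.
Qed.

Fixpoint sq (I : seqZ -> Prop) (x : seqZ) (dl : R) (n : nat) : nat -> R :=
  match n with
  | 0%nat => fun _ => dl
  | S n => upd (sq I x dl n) (S n)
      (epsilon (inhabits 0) (fun c => Pk I x (S (S n)) (upd (sq I x dl n) (S n) c)))
  end.

Lemma Pk_all (I : seqZ -> Prop) x dl :
  inA x -> (forall a, I a -> inA a) -> I zeroA ->
  (forall a b, I a -> I b -> I (addA a b)) -> (forall c a, I a -> I (scalA c a)) -> 0 < dl ->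
  (forall b, I b -> dl <= normA (subA x b)) ->
  exists a : nat -> R, a 0%nat = dl /\ forall n, Pk I x (S n) a.
Proof.
  intros Hx HIA HI0 HIadd HIscal Hdl Hd.
  assert (Inv : forall n, Pk I x (S n) (sq I x dl n)).
  { induction n.
    - apply Pk_base; auto.
    - simpl. apply (epsilon_spec (inhabits 0) (fun c => Pk I x (S (S n)) (upd (sq I x dl n) (S n) c))).
      apply Pk_extend; auto. }
  assert (Agr : forall n j, (j <= n)%nat -> sq I x dl n j = sq I x dl j j).
  { induction n; intros j Hj.
    - assert (j = 0%nat) by lia. subst; auto.
    - destruct (Nat.eq_dec j (S n)); [subst; auto|].
      simpl. unfold upd. destruct (Nat.eqb_spec j (S n)); [lia|]. apply IHn; lia. }
  exists (fun j => sq I x dl j j). split; [reflexivity|].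
  intro n. apply (Pk_ext I x (S n) (sq I x dl n)); auto.
  intros j Hj. apply Agr. lia.
Qed.

Lemma ind_ps (u : nat -> R) j0 s k : (j0 < k)%nat ->
  ps (fun j => (if Nat.eqb j j0 then s else 0) * u j) k = s * u j0.
Proof.
  intro H. rewrite (ps_single _ j0).
  - destruct (Compare_dec.lt_dec j0 k); [|lia]. rewrite Nat.eqb_refl. auto.
  - intros n Hn. destruct (Nat.eqb_spec n j0); [lia|ring].
Qed.

Lemma Pk_coef_bound I x a j0 : inA x -> I zeroA -> Pk I x (S j0) a -> Rabs (a j0) <= normA (vv x j0).
Proof.
  intros Hx HI0 P.
  assert (G : forall s, (s = 1 \/ s = -1) -> s * a j0 <= normA (vv x j0)).
  { intros s Hs. specialize (P zeroA (fun j => if Nat.eqb j j0 then s else 0) HI0).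
    cbv beta in P. rewrite ind_ps in P by lia.
    replace (normA (vv x j0)) with (normA (addA zeroA (comb x (fun j => if Nat.eqb j j0 then s else 0) (S j0)))); auto.
    apply normA_ext. intro z. unfold addA, zeroA, comb.
    rewrite !ind_ps by lia. unfold Cmod. simpl. f_equal.
    destruct Hs as [-> | ->]; ring. }
  unfold Rabs. destruct (Rcase_abs (a j0)).
  - replace (- a j0) with (-1 * a j0) by ring. apply G; auto.
  - replace (a j0) with (1 * a j0) at 1 by ring. apply G; auto.
Qed.

Lemma normA_delta n : normA (delta n) = 1.
Proof.
  unfold normA. destruct (sumZR_single (fun k => Cmod (delta n k)) (Z.of_nat n)) as [_ E].
  - intros k Hk. unfold delta. destruct (Z.eq_dec k (Z.of_nat n)); [tauto|apply Cmod_0].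
  - rewrite E. unfold delta. destruct (Z.eq_dec (Z.of_nat n) (Z.of_nat n)); [|tauto]. apply Cmod_1.
Qed.

Lemma Cmod_Ci : Cmod Ci = 1.
Proof. unfold Cmod, Ci; simpl. replace (0 * (0 * 1) + 1 * (1 * 1)) with 1 by ring. apply sqrt_1. Qed.

Lemma vv_S x j : vv x (S j) = if Nat.odd j then scalA Ci (delta (Nat.div2 j)) else delta (Nat.div2 j).
Proof. reflexivity. Qed.

Lemma vv_odd x n : vv x (2 * n + 1) = delta n.
Proof. replace (2 * n + 1)%nat with (S (2 * n)) by lia. rewrite vv_S, Nat.odd_even, Nat.div2_double. auto. Qed.
Lemma vv_even x n : vv x (2 * n + 2) = scalA Ci (delta n).
Proof.
  replace (2 * n + 2)%nat with (S (S (2 * n))) by lia. rewrite vv_S.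
  replace (S (2 * n)) with (2 * n + 1)%nat by lia. rewrite Nat.odd_odd.
  replace (2 * n + 1)%nat with (S (2 * n)) by lia. rewrite Nat.div2_succ_double. auto.
Qed.

Lemma coef_bounds I x a : inA x -> I zeroA -> (forall n, Pk I x (S n) a) ->
  forall n, Rabs (a (2 * n + 1)%nat) <= 1 /\ Rabs (a (2 * n + 2)%nat) <= 1.
Proof.
  intros Hx HI0 P n. split.
  - rewrite <- (normA_delta n), <- (vv_odd x n). apply Pk_coef_bound with I; auto.
  - rewrite <- (normA_delta n), <- (Rmult_1_l (normA (delta n))), <- Cmod_Ci, <- normA_scal, <- (vv_even x n).
    apply Pk_coef_bound with I; auto.
Qed.

Definition coef (y : seqZ) (j : nat) : R :=
  match j with
  | 0%nat => 0
  | S j' => if Nat.odd j' then snd (y (Z.of_nat (Nat.div2 j'))) else fst (y (Z.of_nat (Nat.div2 j')))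
  end.

Lemma coef_S y j : coef y (S j) = if Nat.odd j then snd (y (Z.of_nat (Nat.div2 j))) else fst (y (Z.of_nat (Nat.div2 j))).
Proof. reflexivity. Qed.
Lemma coef_odd y n : coef y (2 * n + 1) = fst (y (Z.of_nat n)).
Proof. replace (2 * n + 1)%nat with (S (2 * n)) by lia. rewrite coef_S, Nat.odd_even, Nat.div2_double. auto. Qed.
Lemma coef_even y n : coef y (2 * n + 2) = snd (y (Z.of_nat n)).
Proof.
  replace (2 * n + 2)%nat with (S (2 * n + 1)) by lia. rewrite coef_S, Nat.odd_odd.
  replace (2 * n + 1)%nat with (S (2 * n)) by lia. rewrite Nat.div2_succ_double. auto.
Qed.

Definition tt (y : seqZ) (s0 s : R) (j : nat) : R := (if Nat.eqb j 0 then s0 else 0) + s * coef y j.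

Lemma ps_pairs u K : ps u (2 * K + 1) = u 0%nat + ps (fun n => u (2 * n + 1)%nat + u (2 * n + 2)%nat) K.
Proof.
  induction K.
  - simpl. ring.
  - replace (2 * S K + 1)%nat with (S (S (2 * K + 1))) by lia.
    change (ps u (S (S (2 * K + 1)))) with (ps u (2 * K + 1) + u (2 * K + 1)%nat + u (S (2 * K + 1))).
    rewrite IHK. change (ps (fun n => u (2 * n + 1)%nat + u (2 * n + 2)%nat) (S K)) with (ps (fun n => u (2 * n + 1)%nat + u (2 * n + 2)%nat) K + (u (2 * K + 1)%nat + u (2 * K + 2)%nat)). replace (S (2 * K + 1)) with (2 * K + 2)%nat by lia. ring.
Qed.

Lemma tt_ps y s0 s a K :
  ps (fun j => tt y s0 s j * a j) (2 * K + 1) =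
  s0 * a 0%nat + s * ps (fun n => a (2 * n + 1)%nat * fst (y (Z.of_nat n)) + a (2 * n + 2)%nat * snd (y (Z.of_nat n))) K.
Proof.
  rewrite ps_pairs. unfold tt at 1. simpl coef. rewrite <- ps_scal. f_equal; [simpl; ring|].
  apply ps_ext. intro n. unfold tt. rewrite coef_odd, coef_even.
  replace (Nat.eqb (2 * n + 1) 0) with false by (symmetry; apply Nat.eqb_neq; lia).
  replace (Nat.eqb (2 * n + 2) 0) with false by (symmetry; apply Nat.eqb_neq; lia). ring.
Qed.

Definition Tr (K : nat) (y : seqZ) : seqZ :=
  fun z => if Z_lt_dec z 0 then 0%C else if Z_lt_dec z (Z.of_nat K) then y z else 0%C.

Lemma ps_delta (r : nat -> R) z K :
  ps (fun n => if Z.eq_dec z (Z.of_nat n) then r n else 0) K =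
  if Z_lt_dec z 0 then 0 else if Z_lt_dec z (Z.of_nat K) then r (Z.to_nat z) else 0.
Proof.
  destruct (Z_lt_dec z 0) as [Hz|Hz].
  - rewrite (ps_ext _ (fun _ => 0)), ps_zeros; auto. intro n. destruct (Z.eq_dec z (Z.of_nat n)); auto; lia.
  - rewrite (ps_single _ (Z.to_nat z)).
    + destruct (Compare_dec.lt_dec (Z.to_nat z) K) as [h1|h1], (Z_lt_dec z (Z.of_nat K)) as [h2|h2]; try lia.
      all: try (destruct (Z.eq_dec z (Z.of_nat (Z.to_nat z))); auto; lia).
    + intros n1 Hn1. destruct (Z.eq_dec z (Z.of_nat n1)); auto. lia.
Qed.

Lemma comb_tt x y s0 s K z :
  comb x (tt y s0 s) (2 * K + 1) z = (RtoC s0 * x z + RtoC s * Tr K y z)%C.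
Proof.
  unfold comb. apply injective_projections; cbn [fst snd]; rewrite ps_pairs.
  - rewrite (ps_ext _ (fun n => s * (if Z.eq_dec z (Z.of_nat n) then fst (y (Z.of_nat n)) else 0))).
    + rewrite ps_scal, ps_delta. unfold tt, Tr, RtoC. simpl.
      destruct (Z_lt_dec z 0); [simpl; ring|]. destruct (Z_lt_dec z (Z.of_nat K)); simpl.
      * rewrite Z2Nat.id by lia. ring.
      * ring.
    + intro n. rewrite vv_odd, vv_even. unfold tt. rewrite coef_odd, coef_even.
      replace (Nat.eqb (2 * n + 1) 0) with false by (symmetry; apply Nat.eqb_neq; lia).
      replace (Nat.eqb (2 * n + 2) 0) with false by (symmetry; apply Nat.eqb_neq; lia).
      unfold scalA, Ci, delta. destruct (Z.eq_dec z (Z.of_nat n)); simpl; ring.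
  - rewrite (ps_ext _ (fun n => s * (if Z.eq_dec z (Z.of_nat n) then snd (y (Z.of_nat n)) else 0))).
    + rewrite ps_scal, ps_delta. unfold tt, Tr, RtoC. simpl.
      destruct (Z_lt_dec z 0); [simpl; ring|]. destruct (Z_lt_dec z (Z.of_nat K)); simpl.
      * rewrite Z2Nat.id by lia. ring.
      * ring.
    + intro n. rewrite vv_odd, vv_even. unfold tt. rewrite coef_odd, coef_even.
      replace (Nat.eqb (2 * n + 1) 0) with false by (symmetry; apply Nat.eqb_neq; lia).
      replace (Nat.eqb (2 * n + 2) 0) with false by (symmetry; apply Nat.eqb_neq; lia).
      unfold scalA, Ci, delta. destruct (Z.eq_dec z (Z.of_nat n)); simpl; ring.
Qed.

Lemma Res_lim y : inAplus y -> is_lim_seq (fun K => normA (subA y (Tr K y))) 0.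
Proof.
  intros [[Hy1 Hy2] Hy0].
  set (pos := fun n => Cmod (y (Z.of_nat n))).
  assert (E : forall K, normA (subA y (Tr K y)) = Series pos - ps pos K).
  { intro K. unfold normA, sumZR.
    rewrite (Series_ext (fun n => Cmod (subA y (Tr K y) (- Z.of_nat (S n))%Z)) (fun _ => 0)).
    2: { intro n. unfold subA, Tr. destruct (Z_lt_dec (- Z.of_nat (S n)) 0); [|lia].
         rewrite Hy0 by lia. replace (RtoC 0 - RtoC 0)%C with (RtoC 0) by (unfold RtoC; Ceq). apply Cmod_0. }
    rewrite Series_zero, Rplus_0_r.
    set (u' := fun n => Cmod (subA y (Tr K y) (Z.of_nat n))).
    assert (Hu' : forall n, u' n = if Compare_dec.lt_dec n K then 0 else pos n).
    { intro n. unfold u', pos, subA, Tr. destruct (Z_lt_dec (Z.of_nat n) 0); [lia|].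
      destruct (Z_lt_dec (Z.of_nat n) (Z.of_nat K)), (Compare_dec.lt_dec n K); try lia.
      - replace (y (Z.of_nat n) - y (Z.of_nat n))%C with (RtoC 0) by (unfold RtoC; Ceq). apply Cmod_0.
      - f_equal. Ceq. }
    assert (Hex : ex_series u').
    { apply (ex_series_cmp _ pos); auto. intro n. rewrite Hu'. unfold pos.
      destruct (Compare_dec.lt_dec n K); rewrite Rabs_pos_eq; try apply Cmod_ge_0; try lra; try apply Rle_refl. }
    destruct (Series_shift u' K Hex) as [_ E1].
    destruct (Series_shift pos K Hy1) as [_ E2].
    rewrite E1, E2.
    rewrite (ps_ext_loc u' (fun _ => 0)), ps_zeros.
    2: { intros k Hk. rewrite Hu'. destruct (Compare_dec.lt_dec k K); auto; lia. }
    rewrite (Series_ext (fun k => u' (K + k)%nat) (fun k => pos (K + k)%nat)). ring.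
    intro n. rewrite Hu'. destruct (Compare_dec.lt_dec (K + n) K); auto; lia. }
  eapply is_lim_seq_ext. { intro K. symmetry. apply E. }
  replace (Finite 0) with (Finite (Series pos - Series pos)) by (f_equal; ring).
  apply is_lim_seq_minus'. apply is_lim_seq_const. apply Series_lim; auto.
Qed.

Definition UK (a : nat -> R) (y : seqZ) (K : nat) : R :=
  ps (fun n => a (2 * n + 1)%nat * fst (y (Z.of_nat n)) + a (2 * n + 2)%nat * snd (y (Z.of_nat n))) K.

Lemma est I x a y m s0 s K : (forall n, Pk I x (S n) a) -> I m ->
  s0 * a 0%nat + s * UK a y K <= normA (addA m (fun z => RtoC s0 * x z + RtoC s * Tr K y z)%C).
Proof.
  intros P Hm. specialize (P (2 * K)%nat). replace (S (2 * K)) with (2 * K + 1)%nat in P by lia.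
  specialize (P m (tt y s0 s) Hm). rewrite tt_ps in P. unfold UK.
  eapply Rle_trans; [exact P|]. right. apply normA_ext. intro z. unfold addA. rewrite comb_tt. auto.
Qed.

Lemma UK_lim a y : (forall n, Rabs (a (2 * n + 1)%nat) <= 1 /\ Rabs (a (2 * n + 2)%nat) <= 1) -> inA y ->
  ex_series (fun n => a (2 * n + 1)%nat * fst (y (Z.of_nat n)) + a (2 * n + 2)%nat * snd (y (Z.of_nat n))) /\
  is_lim_seq (UK a y) (Series (fun n => a (2 * n + 1)%nat * fst (y (Z.of_nat n)) + a (2 * n + 2)%nat * snd (y (Z.of_nat n)))).
Proof.
  intros Hb [Hy _].
  assert (Hex : ex_series (fun n => a (2 * n + 1)%nat * fst (y (Z.of_nat n)) + a (2 * n + 2)%nat * snd (y (Z.of_nat n)))).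
  { apply (ex_series_cmp _ (fun n => 2 * Cmod (y (Z.of_nat n)))); [|apply exs_scal; auto].
    intro n. destruct (Hb n) as [B1 B2].
    eapply Rle_trans; [apply Rabs_triang|]. rewrite !Rabs_mult.
    pose proof (fst_le (y (Z.of_nat n))). pose proof (snd_le (y (Z.of_nat n))).
    pose proof (Rabs_pos (fst (y (Z.of_nat n)))). pose proof (Rabs_pos (snd (y (Z.of_nat n)))).
    pose proof (Rabs_pos (a (2 * n + 1)%nat)). pose proof (Rabs_pos (a (2 * n + 2)%nat)). nra. }
  split; auto. unfold UK. apply Series_lim; auto.
Qed.

Lemma lim_abs_bound (U Rs : nat -> R) (u : R) : is_lim_seq U u -> is_lim_seq Rs 0 ->
  (forall K, Rabs (U K) <= Rs K) -> u = 0.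
Proof.
  intros HU HR H.
  assert (Rabs u <= 0).
  { apply (lim_le (fun K => Rabs (U K)) Rs); auto. apply (is_lim_seq_abs _ u HU). }
  pose proof (Rabs_pos u). apply Rabs_eq_0. lra.
Qed.

Theorem HB_sep (I : seqZ -> Prop) (x : seqZ) : closed_ideal_Aplus I -> inAplus x -> ~ I x ->
  exists psi : nat -> C, (forall n, Cmod (psi n) <= 2) /\ (forall y, I y -> dd psi y 0 = RtoC 0) /\
    dd psi x 0 <> RtoC 0.
Proof.
  intros [HIA [HI0 [HIadd [HIscal [HImul HIcl]]]]] Hx HnI.
  assert (HIA' : forall a, I a -> inA a) by (intros a Ha; apply (HIA a Ha)).
  destruct (classic (exists eps, 0 < eps /\ forall b, I b -> eps <= normA (subA x b))) as [[dl [Hdl Hd]]|Hno].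
  2: { exfalso. apply HnI. apply HIcl; auto. intros eps Heps.
       apply NNPP. intro Hn. apply Hno. exists eps. split; auto. intros b Hb.
       apply Rnot_lt_le. intro Hlt. apply Hn. exists b. auto. }
  destruct (Pk_all I x dl) as [a [Ha0 P]]; auto. apply Hx.
  assert (Hb := coef_bounds I x a (proj1 Hx) HI0 P).
  set (psi := fun n => (a (2 * n + 1)%nat, - a (2 * n + 2)%nat) : C).
  set (u := fun y => Series (fun n => a (2 * n + 1)%nat * fst (y (Z.of_nat n)) + a (2 * n + 2)%nat * snd (y (Z.of_nat n)))).
  assert (Hfst : forall y, fst (dd psi y 0) = u y).
  { intro y. unfold dd, CS, u. simpl. apply Series_ext. intro n. rewrite Z.sub_0_r. unfold psi. Csimpl. ring. }
  assert (Hsnd : forall y, snd (dd psi y 0) = u (scalA (0, -1) y)).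
  { intro y. unfold dd, CS, u. simpl. apply Series_ext. intro n. rewrite Z.sub_0_r. unfold psi, scalA. Csimpl. ring. }
  assert (HuI : forall y, I y -> u y = 0).
  { intros y Hy. destruct (UK_lim a y Hb (HIA' y Hy)) as [_ L].
    apply (lim_abs_bound (UK a y) (fun K => normA (subA y (Tr K y)))); auto.
    - apply Res_lim; auto.
    - intro K. apply Rabs_le. split.
      + assert (E := est I x a y y 0 (-1) K P Hy).
        replace (normA (addA y (fun z => RtoC 0 * x z + RtoC (-1) * Tr K y z)%C)) with (normA (subA y (Tr K y))) in E.
        * lra.
        * apply normA_ext. intro z. unfold addA, subA, RtoC. f_equal. Ceq.
      + assert (E := est I x a y (scalA (RtoC (-1)) y) 0 1 K P (HIscal _ _ Hy)).
        replace (normA (addA (scalA (RtoC (-1)) y) (fun z => RtoC 0 * x z + RtoC 1 * Tr K y z)%C)) with (normA (subA y (Tr K y))) in E.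
        * lra.
        * apply normA_ext. intro z. unfold addA, subA, scalA, RtoC. rewrite <- Cmod_opp. f_equal. Ceq. }
  assert (Hux : u x = dl).
  { destruct (UK_lim a x Hb (proj1 Hx)) as [_ L].
    assert (dl - u x = 0).
    { apply (lim_abs_bound (fun K => dl - UK a x K) (fun K => normA (subA x (Tr K x)))).
      - apply is_lim_seq_minus'; auto. apply is_lim_seq_const.
      - apply Res_lim; auto.
      - intro K. apply Rabs_le. split.
        + assert (E := est I x a x zeroA (-1) 1 K P HI0).
          replace (normA (addA zeroA (fun z => RtoC (-1) * x z + RtoC 1 * Tr K x z)%C)) with (normA (subA x (Tr K x))) in E.
          * rewrite Ha0 in E. lra.
          * apply normA_ext. intro z. unfold addA, subA, zeroA, RtoC. rewrite <- Cmod_opp. f_equal. Ceq.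
        + assert (E := est I x a x zeroA 1 (-1) K P HI0).
          replace (normA (addA zeroA (fun z => RtoC 1 * x z + RtoC (-1) * Tr K x z)%C)) with (normA (subA x (Tr K x))) in E.
          * rewrite Ha0 in E. lra.
          * apply normA_ext. intro z. unfold addA, subA, zeroA, RtoC. f_equal. Ceq. }
    lra. }
  exists psi. split; [|split].
  - intro n. eapply Rle_trans; [apply Cmod_le_sum|]. unfold psi. cbn [fst snd]. rewrite Rabs_Ropp.
    destruct (Hb n). lra.
  - intros y Hy. apply injective_projections.
    + rewrite Hfst. simpl. apply HuI; auto.
    + rewrite Hsnd. simpl. apply HuI. apply HIscal; auto.
  - intro E. assert (F := f_equal fst E). rewrite Hfst, Hux in F. simpl in F. lra.
Qed.

Lemma dd_comm psi (f b : seqZ) : (forall n, (n < 0)%Z -> f n = 0%C) -> (forall n, (n < 0)%Z -> b n = 0%C) ->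
  dd psi (mulA b f) 0 = dd psi (mulA f b) 0.
Proof. intros Hf Hb. unfold dd. apply CS_ext. intro n. rewrite mulA_comm; auto. Qed.

Theorem lemma3p1 (I : seqZ -> Prop) (f : seqZ) :
  closed_ideal_Aplus I ->
  inAplus f ->
  gen_closed_ideal_A I f ->
  weakstar_closed (division_ideal I f).
Proof.
  intros HI Hf Hgen.
  pose proof HI as [HIA [HI0 [HIadd [HIscal [HImul HIcl]]]]].
  split; [intros a [Ha _]; exact Ha|].
  split; [intros a [Ha _]; exact Ha|].
  intros g [Hg Hng].
  assert (HnI : ~ I (mulA f g)) by (intro H; apply Hng; split; auto).
  assert (Hx : inAplus (mulA f g)) by (apply mulA_Aplus; auto).
  destruct (HB_sep I (mulA f g) HI Hx HnI) as [psi [Hpsi [HIz Hne]]].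
  destruct (J_closed_ideal psi 2 I Hpsi HIA HImul HIz) as [HJ HJI].
  destruct (Hgen _ HJ HJI) as [HfA Hfl].
  set (c := fun m : nat => dd psi f (Z.of_nat m)).
  assert (Hpair : forall b, inAplus b -> pairing b c = dd psi (mulA f b) 0).
  { intros b Hb. unfold c. rewrite (pairing_dd psi 2); auto. apply dd_comm. apply Hf. apply Hb. }
  assert (Hpos : 0 < Cmod (pairing g c)).
  { rewrite Hpair by auto. destruct (Rle_lt_or_eq_dec 0 _ (Cmod_ge_0 (dd psi (mulA f g) 0))); auto.
    exfalso. apply Hne. apply Cmod_eq_0. auto. }
  exists (c :: nil), (Cmod (pairing g c)). split; [auto|]. split.
  - intros c' [<-|[]]. exact Hfl.
  - intros b Hb Hnear. split; auto. intros [_ HIb].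
    specialize (Hnear c (or_introl eq_refl)).
    rewrite (Hpair b Hb), (HIz _ HIb) in Hnear.
    replace (RtoC 0 - pairing g c)%C with (- pairing g c)%C in Hnear by (unfold RtoC; Ceq).
    rewrite Cmod_opp in Hnear. lra.
Qed.
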